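(* Let $H$ be local $\delta$-admissible on a set $T\subset(-\infty,t_G)$, where $t_G\in\{0,\infty\}$. Then for any $\varepsilon>0$ there exist $\eta>0$ and $t_0<t_G$ such that for all $t\in T$ with $t>t_0$ and all real $\theta$ with $|\theta|\le\frac{\eta}{2}\delta(t)$, \[ (1-\varepsilon)B(t)|\theta|\le|A(t+i\theta)-A(t)|\le(1+\varepsilon)B(t)|\theta|, \] and \[ \frac{1-\varepsilon}{2}\theta^2B(t)\le\int_0^\theta\mathrm{Im}\left[A(t+i\varphi)\right]d\varphi\le\frac{1+\varepsilon}{2}\theta^2B(t). \]
   Context: Let $G(z)=\sum_{n\ge0}a_n^2z^n$ with $a_n\ge0$, infinitely many non-zero, and radius of convergence $R_G\in\{1,\infty\}$; $t_G=\log R_G$. Put $H(z)=G(e^z)$, $A(z)=H'(z)/H(z)$, $B(z)=A'(z)$. $H$ is local $\delta$-admissible on $T\subset(-\infty,t_G)$ if there is a function $\delta:[-\infty,t_G)\to(0,\pi)$ (with $t+\delta(t)<t_G$) such that for every $\varepsilon>0$ there exist $\eta>0$ and $t_0(\varepsilon)$ such that for all $t\in T\cap(t_0(\varepsilon),t_G)$ and all complex $\tau$ with $|\tau|\le\eta\delta(t)$, \[ \log\frac{H(t+\tau)}{H(t)}=\tau A(t)+\tfrac12\tau^2B(t)+h_t(\tau),\qquad |h_t(\tau)|\le\varepsilon|\tau|^2B(t), \] where the logarithm is the branch analytic in $\tau$ and vanishing at $\tau=0$. *)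

(* Defs.v *)
From Stdlib Require Import Reals.
From Coquelicot Require Import Coquelicot.
Open Scope R_scope.

Definition cexp (z : C) : C := (exp (Re z) * cos (Im z), exp (Re z) * sin (Im z)).

Definition Gser (a : nat -> R) (z : C) : C :=
  @lim (CompleteNormedModule.CompleteSpace _ C_CompleteNormedModule)
    (filtermap (fun N => sum_n (fun k => Cmult (RtoC (a k ^ 2)) (pow_n z k)) N) eventually).

Definition Hfun (a : nat -> R) (z : C) : C := Gser a (cexp z).
Definition Afun (a : nat -> R) (z : C) : C := Cdiv (C_derive (Hfun a) z) (Hfun a z).
Definition Bfun (a : nat -> R) (z : C) : C := C_derive (Afun a) z.

(* standing assumptions on the coefficient sequence a and t_G = log R_G *)
Definition std_hyp (a : nat -> R) (tG : Rbar) : Prop :=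
  (forall n, 0 <= a n) /\
  (forall N, exists n, (N <= n)%nat /\ a n <> 0) /\
  ((CV_radius (fun n => a n ^ 2) = Finite 1 /\ tG = Finite 0) \/
   (CV_radius (fun n => a n ^ 2) = p_infty /\ tG = p_infty)).

Definition local_delta_admissible (a : nat -> R) (tG : Rbar) (T : R -> Prop)
    (delta : R -> R) : Prop :=
  (forall t : R, Rbar_lt (Finite t) tG -> 0 < delta t < PI /\ Rbar_lt (Finite (t + delta t)) tG) /\
  forall eps, 0 < eps ->
    exists eta, 0 < eta /\
    exists t0 : R, Rbar_lt (Finite t0) tG /\
    forall t : R, T t -> t0 < t -> Rbar_lt (Finite t) tG ->
      exists L : C -> C,
        L (RtoC 0) = RtoC 0 /\
        forall tau : C, Cmod tau <= eta * delta t ->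
          ex_derive L tau /\
          cexp (L tau) = Cdiv (Hfun a (Cplus (RtoC t) tau)) (Hfun a (RtoC t)) /\
          Cmod (L tau - (tau * Afun a (RtoC t) + / 2 * (tau * tau) * Bfun a (RtoC t)))%C
            <= eps * (Cmod tau ^ 2) * Re (Bfun a (RtoC t)).

(* Main.v *)
Require Import Defs.
From Stdlib Require Import Reals Lra Lia.
From Coquelicot Require Import Coquelicot.
Open Scope R_scope.


Lemma Cmod_le_abs (z : C) : Cmod z <= Rabs (Re z) + Rabs (Im z).
Proof.
  destruct z as [x y]. unfold Cmod, Re, Im; simpl.
  apply Rsqr_incr_0_var.
  - rewrite Rsqr_sqrt by nra. unfold Rsqr.
    pose proof (Rabs_pos x); pose proof (Rabs_pos y).
    pose proof (pow2_abs x); pose proof (pow2_abs y). nra.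
  - pose proof (Rabs_pos x); pose proof (Rabs_pos y); lra.
Qed.

Lemma Im_le_Cmod (z : C) : Rabs (Im z) <= Cmod z.
Proof.
  pose proof (Rmax_Cmod z). destruct z; simpl in *.
  eapply Rle_trans; [apply Rmax_r|]. exact H.
Qed.

Lemma Cmod_Ri (a b : R) : Cmod (a, b) = sqrt (a^2 + b^2).
Proof. reflexivity. Qed.

Lemma cexp_add (x y : C) : cexp (x + y) = (cexp x * cexp y)%C.
Proof.
  destruct x as [a b], y as [c d]. unfold cexp, Cmult, Cplus, Re, Im; simpl.
  rewrite exp_plus, cos_plus, sin_plus. f_equal; ring.
Qed.

Lemma cexp_0 : cexp 0 = 1%C.
Proof.
  unfold cexp, Re, Im; simpl. rewrite exp_0, cos_0, sin_0.
  unfold RtoC. f_equal; ring.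
Qed.

Lemma Cmod_cexp (z : C) : Cmod (cexp z) = exp (Re z).
Proof.
  destruct z as [a b]. unfold cexp, Cmod, Re, Im; simpl.
  replace ((exp a * cos b) * ((exp a * cos b) * 1) + (exp a * sin b) * ((exp a * sin b) * 1))
    with ((exp a)^2 * ((sin b)^2 + (cos b)^2)) by ring.
  rewrite (Rplus_comm (sin b ^2)).
  replace (cos b ^ 2 + sin b ^ 2) with 1.
  - rewrite Rmult_1_r. apply sqrt_pow2. pose proof (exp_pos a); lra.
  - rewrite <- (sin2_cos2 b). unfold Rsqr. ring.
Qed.

Lemma cexp_neq0 (z : C) : cexp z <> 0%C.
Proof.
  intro H. pose proof (Cmod_cexp z). rewrite H, Cmod_0 in H0.
  pose proof (exp_pos (Re z)). lra.
Qed.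

Lemma pow_n_cexp (z : C) (n : nat) : pow_n (cexp z) n = cexp (RtoC (INR n) * z).
Proof.
  induction n.
  - simpl. replace (RtoC 0 * z)%C with (RtoC 0) by ring. rewrite cexp_0. reflexivity.
  - simpl pow_n. rewrite IHn. change (mult (cexp z) (cexp (RtoC (INR n) * z))) with
     (cexp z * cexp (RtoC (INR n) * z))%C.
    rewrite <- cexp_add. f_equal. rewrite S_INR, RtoC_plus. ring.
Qed.

Lemma exp_le_mono (x y : R) : x <= y -> exp x <= exp y.
Proof. intros [H|H]; [left; apply exp_increasing; auto| subst; lra]. Qed.

Lemma MVT_bound (f f' : R -> R) (x K : R) :
  (forall c, derivable_pt_lim f c (f' c)) ->
  (forall c, Rabs c <= Rabs x -> Rabs (f' c) <= K) ->
  Rabs (f x - f 0) <= K * Rabs x.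
Proof.
  intros Hd Hb.
  destruct (MVT_abs f f' 0 x) as [c [Hc Hc2]].
  { intros c _. apply Hd. }
  rewrite Hc, Rminus_0_r. apply Rmult_le_compat_r; [apply Rabs_pos|].
  apply Hb. unfold Rmin, Rmax in Hc2. destruct (Rle_dec 0 x).
  - rewrite !Rabs_right; lra.
  - rewrite !Rabs_left1; lra.
Qed.

Lemma exp_m1_bound (x : R) : Rabs (exp x - 1) <= Rabs x * exp (Rabs x).
Proof.
  rewrite <- exp_0 at 1. rewrite Rmult_comm.
  apply (MVT_bound exp exp x).
  - intros; apply derivable_pt_lim_exp.
  - intros c Hc. rewrite Rabs_right by (left; apply exp_pos).
    apply exp_le_mono. pose proof (Rle_abs c). lra.
Qed.

Lemma exp_m1x_bound (x : R) : Rabs (exp x - 1 - x) <= x^2 * exp (Rabs x).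
Proof.
  replace (exp x - 1 - x) with ((fun y => exp y - y) x - (fun y => exp y - y) 0)
    by (simpl; rewrite exp_0; ring).
  replace (x^2 * exp (Rabs x)) with ((Rabs x * exp (Rabs x)) * Rabs x)
    by (rewrite <- pow2_abs; ring).
  apply (MVT_bound (fun y => exp y - y) (fun y => exp y - 1) x).
  - intros c. apply derivable_pt_lim_minus; [apply derivable_pt_lim_exp|apply derivable_pt_lim_id].
  - intros c Hc. eapply Rle_trans; [apply exp_m1_bound|].
    apply Rmult_le_compat; auto using Rabs_pos. left; apply exp_pos.
    apply exp_le_mono; auto.
Qed.

Lemma sin_bound_abs (x : R) : Rabs (sin x) <= Rabs x.
Proof.
  rewrite <- (Rminus_0_r (sin x)), <- sin_0 at 1. rewrite <- (Rmult_1_l (Rabs x)).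
  apply (MVT_bound sin cos x).
  - intros; apply derivable_pt_lim_sin.
  - intros c _. pose proof (COS_bound c). apply Rabs_le; lra.
Qed.

Lemma cos_bound_abs (x : R) : Rabs (cos x - 1) <= x^2.
Proof.
  rewrite <- cos_0 at 1. rewrite <- pow2_abs. replace (Rabs x ^ 2) with (Rabs x * Rabs x) by ring.
  apply (MVT_bound cos (fun y => - sin y) x).
  - intros; apply derivable_pt_lim_cos.
  - intros c Hc. rewrite Rabs_Ropp. eapply Rle_trans; [apply sin_bound_abs|auto].
Qed.

Lemma sin_x_bound (x : R) : Rabs (sin x - x) <= 2 * x^2.
Proof.
  destruct (Rle_dec (Rabs x) 1).
  - replace (sin x - x) with ((fun y => sin y - y) x - (fun y => sin y - y) 0)
      by (simpl; rewrite sin_0; ring).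
    eapply Rle_trans.
    + apply (MVT_bound (fun y => sin y - y) (fun y => cos y - 1) x (x^2)).
      * intros c. apply derivable_pt_lim_minus; [apply derivable_pt_lim_sin|apply derivable_pt_lim_id].
      * intros c Hc. eapply Rle_trans; [apply cos_bound_abs|].
        rewrite <- (pow2_abs c), <- (pow2_abs x). pose proof (Rabs_pos c). nra.
    + rewrite <- (pow2_abs x). pose proof (Rabs_pos x). nra.
  - eapply Rle_trans; [apply Rabs_triang|]. rewrite Rabs_Ropp.
    pose proof (SIN_bound x). assert (Rabs (sin x) <= 1) by (apply Rabs_le; lra).
    rewrite <- (pow2_abs x). nra.
Qed.

Lemma cexp_est (u : C) : Cmod (cexp u - 1 - u) <= 4 * Cmod u ^ 2 * exp (Cmod u).
Proof.
  destruct u as [a b].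
  assert (Ha : Rabs a <= Cmod (a,b)) by apply (re_le_Cmod (a,b)).
  assert (Hb : Rabs b <= Cmod (a,b)) by apply (Im_le_Cmod (a,b)).
  assert (Hm : Cmod (a,b) ^ 2 = a^2 + b^2).
  { unfold Cmod; cbn [fst snd]. rewrite pow2_sqrt; [ring| nra]. }
  eapply Rle_trans; [apply Cmod_le_abs|].
  assert (ER : Re (cexp (a,b) - 1 - (a,b)) = (exp a - 1 - a) + exp a * (cos b - 1))
    by (unfold cexp, Re, Im; simpl; ring).
  assert (EI : Im (cexp (a,b) - 1 - (a,b)) = (exp a - 1) * sin b + (sin b - b))
    by (unfold cexp, Re, Im; simpl; ring).
  rewrite ER, EI. rewrite Hm.
  assert (E1 : exp (Rabs a) <= exp (Cmod (a,b))) by (apply exp_le_mono; auto).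
  pose proof (exp_pos a). pose proof (exp_pos (Rabs a)).
  assert (Ea : exp a <= exp (Rabs a)) by (apply exp_le_mono, Rle_abs).
  pose proof (exp_m1x_bound a). pose proof (exp_m1_bound a).
  pose proof (cos_bound_abs b). pose proof (sin_bound_abs b). pose proof (sin_x_bound b).
  pose proof (Rabs_pos (cos b - 1)). pose proof (Rabs_pos (sin b)). pose proof (Rabs_pos (exp a - 1)).
  pose proof (Rabs_pos a). pose proof (Rabs_pos b).
  assert (Rabs a * Rabs b <= a^2 + b^2).
  { rewrite <- (pow2_abs a), <- (pow2_abs b). nra. }
  assert (exp (Rabs a) >= 1). { rewrite <- exp_0. apply Rle_ge, exp_le_mono. auto. }
  assert (R1 : Rabs ((exp a - 1 - a) + exp a * (cos b - 1)) <= a^2 * exp (Rabs a) + exp (Rabs a) * b^2).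
  { eapply Rle_trans; [apply Rabs_triang|]. rewrite Rabs_mult, (Rabs_right (exp a)) by lra.
    apply Rplus_le_compat; auto. apply Rmult_le_compat; auto; lra. }
  assert (R2 : Rabs ((exp a - 1) * sin b + (sin b - b)) <= Rabs a * exp (Rabs a) * Rabs b + 2 * b^2).
  { eapply Rle_trans; [apply Rabs_triang|]. rewrite Rabs_mult.
    apply Rplus_le_compat; auto. apply Rmult_le_compat; auto. }
  assert (b^2 >= 0) by nra. assert (a^2 >= 0) by nra.
  apply Rle_trans with ((a^2 + b^2 + Rabs a * Rabs b + 2 * b^2) * exp (Rabs a)).
  { nra. }
  apply Rle_trans with (4 * (a^2+b^2) * exp (Rabs a)).
  { apply Rmult_le_compat_r; lra. }
  apply Rmult_le_compat_l; [nra|auto].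
Qed.


Definition cdiff (f : C -> C) (z l : C) := forall eps, 0 < eps -> exists del, 0 < del /\
  forall w, Cmod w < del -> Cmod (f (z + w) - f z - l * w)%C <= eps * Cmod w.

Lemma ballC (z y : C) (e : R) : @ball (AbsRing_UniformSpace C_AbsRing) z e y <-> Cmod (y - z) < e.
Proof. reflexivity. Qed.

Lemma is_derive_cdiff (f : C -> C) z l :
  @is_derive C_AbsRing C_NormedModule f z l -> cdiff f z l.
Proof.
  intros [_ Hd] eps Heps.
  specialize (Hd z (fun P H => H) (mkposreal eps Heps)).
  destruct Hd as [[d Hdp] Hd]. exists d. split; [lra|].
  intros w Hw. specialize (Hd (z + w)%C).
  assert (B : Cmod (z + w - z)%C < d) by (replace (z + w - z)%C with w by ring; lra).
  specialize (Hd B). simpl in Hd.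
  change (norm ?x) with (Cmod x) in Hd.
  unfold minus, plus, opp, scal in Hd; simpl in Hd.
  change (mult ?x ?y) with (Cmult x y) in Hd.
  replace (z + w + - z)%C with w in Hd by ring.
  replace (f (z + w)%C + - f z + - (w * l))%C with (f (z + w) - f z - l * w)%C in Hd by ring.
  exact Hd.
Qed.

Lemma cdiff_is_derive (f : C -> C) z l :
  cdiff f z l -> @is_derive C_AbsRing C_NormedModule f z l.
Proof.
  intros Hc. split.
  - apply is_linear_scal_l.
  - intros x Hx. apply (@is_filter_lim_locally_unique C_AbsRing (AbsRing_NormedModule C_AbsRing)) in Hx. subst x.
    intros [eps Heps]. destruct (Hc eps Heps) as [d [Hd Hw]].
    exists (mkposreal d Hd). intros y Hy. simpl in Hy |- *.
    change (UniformSpace.sort (AbsRing_UniformSpace C_AbsRing)) with C in *.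
    change (Cmod (y - z)%C < d) in Hy.
    specialize (Hw (y - z)%C Hy). replace (z + (y - z))%C with y in Hw by ring.
    change (norm ?x) with (Cmod x).
    unfold minus, plus, opp, scal; simpl.
    change (mult ?x ?y) with (Cmult x y).
    replace (f y + - f z + - ((y + - z) * l))%C with (f y - f z - l * (y - z))%C by ring.
    exact Hw.
Qed.

Definition CDer (f : C -> C) (z l : C) := @is_derive C_AbsRing (AbsRing_NormedModule C_AbsRing) f z l.

Lemma CDer_cdiff f z l : CDer f z l -> cdiff f z l.
Proof.
  intros [_ Hd] eps Heps.
  specialize (Hd z (fun P H => H) (mkposreal eps Heps)).
  destruct Hd as [[d Hdp] Hd]. exists d. split; [lra|].
  intros w Hw. specialize (Hd (z + w)%C).
  assert (B : Cmod (z + w - z)%C < d) by (replace (z + w - z)%C with w by ring; lra).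
  specialize (Hd B). simpl in Hd.
  change (norm ?x) with (Cmod x) in Hd.
  unfold minus, plus, opp, scal in Hd; simpl in Hd.
  change (mult ?x ?y) with (Cmult x y) in Hd.
  replace (z + w + - z)%C with w in Hd by ring.
  replace (f (z + w)%C + - f z + - (w * l))%C with (f (z + w) - f z - l * w)%C in Hd by ring.
  exact Hd.
Qed.

Lemma cdiff_CDer f z l : cdiff f z l -> CDer f z l.
Proof.
  intros Hc. split.
  - apply is_linear_scal_l.
  - intros x Hx. apply (@is_filter_lim_locally_unique C_AbsRing (AbsRing_NormedModule C_AbsRing)) in Hx. subst x.
    intros [eps Heps]. destruct (Hc eps Heps) as [d [Hd Hw]].
    exists (mkposreal d Hd). intros y Hy. simpl in Hy |- *.
    change (UniformSpace.sort (AbsRing_UniformSpace C_AbsRing)) with C in *.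
    change (Cmod (y - z)%C < d) in Hy.
    specialize (Hw (y - z)%C Hy). replace (z + (y - z))%C with y in Hw by ring.
    change (norm ?x) with (Cmod x).
    unfold minus, plus, opp, scal; simpl.
    change (mult ?x ?y) with (Cmult x y).
    replace (f y + - f z + - ((y + - z) * l))%C with (f y - f z - l * (y - z))%C by ring.
    exact Hw.
Qed.

Lemma CDer_is_derive f z l : CDer f z l -> @is_derive C_AbsRing C_NormedModule f z l.
Proof. intros; apply cdiff_is_derive, CDer_cdiff; auto. Qed.
Lemma is_derive_CDer f z l : @is_derive C_AbsRing C_NormedModule f z l -> CDer f z l.
Proof. intros; apply cdiff_CDer, is_derive_cdiff; auto. Qed.

Lemma CDer_plus f g z a b : CDer f z a -> CDer g z b -> CDer (fun x => f x + g x)%C z (a + b)%C.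
Proof. unfold CDer in *. intros Hf Hg. apply (@is_derive_plus C_AbsRing (AbsRing_NormedModule C_AbsRing) f g z a b Hf Hg). Qed.

Lemma CDer_minus f g z a b : CDer f z a -> CDer g z b -> CDer (fun x => f x - g x)%C z (a - b)%C.
Proof. unfold CDer in *. intros Hf Hg. apply (@is_derive_minus C_AbsRing (AbsRing_NormedModule C_AbsRing) f g z a b Hf Hg). Qed.

Lemma CDer_mult f g z a b : CDer f z a -> CDer g z b -> CDer (fun x => f x * g x)%C z (a * g z + f z * b)%C.
Proof. unfold CDer in *. intros Hf Hg. apply (is_derive_mult f g z a b Hf Hg). intros; apply Cmult_comm. Qed.

Lemma CDer_const (c z : C) : CDer (fun _ => c) z 0%C.
Proof. unfold CDer. apply (@is_derive_const C_AbsRing (AbsRing_NormedModule C_AbsRing) c z). Qed.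

Lemma CDer_id (z : C) : CDer (fun x => x) z 1%C.
Proof. unfold CDer. apply (is_derive_id z). Qed.

Lemma CDer_comp f g z a b : CDer f (g z) a -> CDer g z b -> CDer (fun x => f (g x)) z (b * a)%C.
Proof. unfold CDer in *. intros Hf Hg. apply (@is_derive_comp C_AbsRing (AbsRing_NormedModule C_AbsRing) f g z a b Hf Hg). Qed.

Lemma CDer_ext_loc f g z l : (exists d, 0 < d /\ forall w, Cmod (w - z) < d -> f w = g w) ->
  CDer f z l -> CDer g z l.
Proof.
  unfold CDer. intros [d [Hd H]] Hf. apply (@is_derive_ext_loc C_AbsRing (AbsRing_NormedModule C_AbsRing) f g z l); auto.
  exists (mkposreal d Hd). intros y Hy. apply H. exact Hy.
Qed.

Lemma CDer_unique f z l1 l2 : CDer f z l1 -> CDer f z l2 -> l1 = l2.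
Proof.
  intros H1 H2. apply CDer_is_derive in H1. apply CDer_is_derive in H2.
  apply is_C_derive_unique in H1. apply is_C_derive_unique in H2. congruence.
Qed.

Lemma quad_cdiff f z l (d K : R) : 0 < d ->
  (forall w, Cmod w < d -> Cmod (f (z + w) - f z - l * w)%C <= K * Cmod w ^ 2) -> cdiff f z l.
Proof.
  intros Hd H eps Heps. exists (Rmin d (eps / (Rabs K + 1))). split.
  { apply Rmin_pos; auto. apply Rdiv_lt_0_compat; auto. pose proof (Rabs_pos K); lra. }
  intros w Hw. eapply Rle_trans; [apply H; eapply Rlt_le_trans; [exact Hw| apply Rmin_l]|].
  pose proof (Cmod_ge_0 w). pose proof (Rmin_r d (eps / (Rabs K + 1))).
  assert (Cmod w * (Rabs K + 1) <= eps).
  { pose proof (Rabs_pos K). apply Rle_trans with (eps / (Rabs K + 1) * (Rabs K + 1)).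
    apply Rmult_le_compat_r; lra. field_simplify; lra. }
  pose proof (Rle_abs K). pose proof (Rabs_pos K). nra.
Qed.

Lemma CDer_cexp (z : C) : CDer cexp z (cexp z).
Proof.
  apply cdiff_CDer. apply (quad_cdiff _ _ _ 1 (4 * exp (Re z) * exp 1)); [lra|].
  intros w Hw.
  replace (cexp (z + w) - cexp z - cexp z * w)%C with (cexp z * (cexp w - 1 - w))%C
    by (rewrite cexp_add; ring).
  rewrite Cmod_mult, Cmod_cexp. pose proof (cexp_est w). pose proof (exp_pos (Re z)).
  assert (exp (Cmod w) <= exp 1) by (apply exp_le_mono; lra).
  pose proof (Cmod_ge_0 w). pose proof (exp_pos (Cmod w)).
  apply Rle_trans with (exp (Re z) * (4 * Cmod w ^ 2 * exp (Cmod w))).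
  apply Rmult_le_compat_l; lra.
  replace (4 * exp (Re z) * exp 1 * Cmod w ^ 2) with (exp (Re z) * (4 * Cmod w ^ 2 * exp 1)) by ring.
  apply Rmult_le_compat_l; [lra|]. apply Rmult_le_compat_l; [nra|auto].
Qed.

Lemma CDer_inv (z : C) : z <> 0%C -> CDer Cinv z (- / (z * z))%C.
Proof.
  intros Hz. apply cdiff_CDer. pose proof (proj1 (Cmod_gt_0 z) Hz) as Hm.
  apply (quad_cdiff _ _ _ (Cmod z / 2) (2 / (Cmod z ^ 3))); [lra|].
  intros w Hw.
  assert (Hzw : Cmod z / 2 <= Cmod (z + w)).
  { pose proof (Cmod_triangle (z + w) (- w)). rewrite Cmod_opp in H.
    replace (z + w + - w)%C with z in H by ring. lra. }
  assert (Hzw0 : (z + w)%C <> 0%C).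
  { intro E. rewrite E, Cmod_0 in Hzw. lra. }
  replace (/ (z + w) - / z - - / (z * z) * w)%C with (w * w / (z * z * (z + w)))%C
    by (field; auto).
  rewrite Cmod_div by (apply Cmult_neq_0; [apply Cmult_neq_0|]; auto).
  rewrite !Cmod_mult.
  assert (0 < Cmod (z + w)) by lra.
  apply Rle_trans with (Cmod w * Cmod w / (Cmod z * Cmod z * (Cmod z / 2))).
  - unfold Rdiv. apply Rmult_le_compat_l. pose proof (Cmod_ge_0 w); nra.
    apply Rinv_le_contravar. apply Rmult_lt_0_compat; [nra|lra].
    apply Rmult_le_compat_l; nra.
  - right. field. lra.
Qed.


Definition rderiv (g : R -> C) (x : R) (G : C) := forall eps, 0 < eps -> exists del, 0 < del /\
  forall h, Rabs h < del -> Cmod (g (x + h)%R - g x - G * RtoC h)%C <= eps * Rabs h.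

Lemma Re_sub (u v : C) : Re (u - v)%C = Re u - Re v.
Proof. destruct u, v; unfold Re; simpl; ring. Qed.
Lemma Im_sub (u v : C) : Im (u - v)%C = Im u - Im v.
Proof. destruct u, v; unfold Im; simpl; ring. Qed.
Lemma Re_mulR (u : C) (h : R) : Re (u * RtoC h)%C = Re u * h.
Proof. destruct u; unfold Re, RtoC; simpl; ring. Qed.
Lemma Im_mulR (u : C) (h : R) : Im (u * RtoC h)%C = Im u * h.
Proof. destruct u; unfold Im, RtoC; simpl; ring. Qed.

Lemma rderiv_comps g x G :
  is_derive (fun y => Re (g y)) x (Re G) -> is_derive (fun y => Im (g y)) x (Im G) -> rderiv g x G.
Proof.
  intros H1 H2 eps Heps. apply is_derive_Reals in H1. apply is_derive_Reals in H2.
  destruct (H1 (eps/2) ltac:(lra)) as [d1 Hd1]. destruct (H2 (eps/2) ltac:(lra)) as [d2 Hd2].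
  exists (Rmin d1 d2). split. { apply Rmin_pos; apply cond_pos. }
  intros h Hh. destruct (Req_dec h 0) as [->|Hn].
  { rewrite Rplus_0_r. replace (g x - g x - G * RtoC 0)%C with (RtoC 0) by ring.
    rewrite Cmod_0, Rabs_R0. lra. }
  eapply Rle_trans; [apply Cmod_le_abs|].
  rewrite Re_sub, Re_sub, Im_sub, Im_sub, Re_mulR, Im_mulR.
  assert (A1 : Rabs h < d1) by (eapply Rlt_le_trans; [exact Hh| apply Rmin_l]).
  assert (A2 : Rabs h < d2) by (eapply Rlt_le_trans; [exact Hh| apply Rmin_r]).
  specialize (Hd1 h Hn A1). specialize (Hd2 h Hn A2).
  assert (Hh0 : 0 < Rabs h) by (apply Rabs_pos_lt; auto).
  replace (Re (g (x + h)%R) - Re (g x) - Re G * h) with (((Re (g (x + h)%R) - Re (g x))/h - Re G) * h)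
    by (field; auto).
  replace (Im (g (x + h)%R) - Im (g x) - Im G * h) with (((Im (g (x + h)%R) - Im (g x))/h - Im G) * h)
    by (field; auto).
  rewrite !Rabs_mult. nra.
Qed.

Lemma rderiv_Re g x G : rderiv g x G -> is_derive (fun y => Re (g y)) x (Re G).
Proof.
  intros H. apply is_derive_Reals. intros eps Heps.
  destruct (H (eps/2) ltac:(lra)) as [d [Hd Hw]]. exists (mkposreal d Hd).
  intros h Hn Hh. simpl in Hh. specialize (Hw h Hh).
  pose proof (re_le_Cmod (g (x + h)%R - g x - G * RtoC h)%C).
  rewrite Re_sub, Re_sub, Re_mulR in H0.
  assert (Hh0 : 0 < Rabs h) by (apply Rabs_pos_lt; auto).
  replace ((Re (g (x + h)%R) - Re (g x)) / h - Re G) with ((Re (g (x + h)%R) - Re (g x) - Re G * h) / h)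
    by (field; auto).
  unfold Rdiv. rewrite Rabs_mult, Rabs_inv.
  apply Rle_lt_trans with (eps / 2 * Rabs h * / Rabs h).
  - apply Rmult_le_compat_r. left; apply Rinv_0_lt_compat; auto. lra.
  - field_simplify; lra.
Qed.

Lemma rderiv_Im g x G : rderiv g x G -> is_derive (fun y => Im (g y)) x (Im G).
Proof.
  intros H. apply is_derive_Reals. intros eps Heps.
  destruct (H (eps/2) ltac:(lra)) as [d [Hd Hw]]. exists (mkposreal d Hd).
  intros h Hn Hh. simpl in Hh. specialize (Hw h Hh).
  pose proof (Im_le_Cmod (g (x + h)%R - g x - G * RtoC h)%C).
  rewrite Im_sub, Im_sub, Im_mulR in H0.
  assert (Hh0 : 0 < Rabs h) by (apply Rabs_pos_lt; auto).
  replace ((Im (g (x + h)%R) - Im (g x)) / h - Im G) with ((Im (g (x + h)%R) - Im (g x) - Im G * h) / h)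
    by (field; auto).
  unfold Rdiv. rewrite Rabs_mult, Rabs_inv.
  apply Rle_lt_trans with (eps / 2 * Rabs h * / Rabs h).
  - apply Rmult_le_compat_r. left; apply Rinv_0_lt_compat; auto. lra.
  - field_simplify; lra.
Qed.

Lemma rderiv_chain k g x K G : cdiff k (g x) K -> rderiv g x G ->
  rderiv (fun y => k (g y)) x (K * G)%C.
Proof.
  intros Hk Hg eps Heps.
  set (a := Cmod G + 1). set (b := Cmod K + 1).
  assert (Ha : 0 < a) by (unfold a; pose proof (Cmod_ge_0 G); lra).
  assert (Hb : 0 < b) by (unfold b; pose proof (Cmod_ge_0 K); lra).
  destruct (Hk (eps / (2 * a)) ltac:(apply Rdiv_lt_0_compat; lra)) as [dk [Hdk Hk']].
  destruct (Hg 1 ltac:(lra)) as [d1 [Hd1 Hg1]].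
  destruct (Hg (eps / (2 * b)) ltac:(apply Rdiv_lt_0_compat; lra)) as [d2 [Hd2 Hg2]].
  exists (Rmin (Rmin d1 d2) (dk / a)). split.
  { repeat apply Rmin_pos; auto. apply Rdiv_lt_0_compat; auto. }
  intros h Hh.
  assert (A1 : Rabs h < d1) by (eapply Rlt_le_trans; [exact Hh|]; eapply Rle_trans; [apply Rmin_l| apply Rmin_l]).
  assert (A2 : Rabs h < d2) by (eapply Rlt_le_trans; [exact Hh|]; eapply Rle_trans; [apply Rmin_l| apply Rmin_r]).
  assert (A3 : Rabs h < dk / a) by (eapply Rlt_le_trans; [exact Hh| apply Rmin_r]).
  set (D := (g (x + h)%R - g x)%C).
  assert (HD : Cmod D <= a * Rabs h).
  { specialize (Hg1 h A1). unfold D.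
    replace (g (x + h)%R - g x)%C with ((g (x + h)%R - g x - G * RtoC h) + G * RtoC h)%C by ring.
    eapply Rle_trans; [apply Cmod_triangle|]. rewrite Cmod_mult, Cmod_R. unfold a. lra. }
  assert (HD2 : Cmod D < dk).
  { eapply Rle_lt_trans; [exact HD|]. apply Rmult_lt_reg_l with (/ a).
    apply Rinv_0_lt_compat; auto. replace (/ a * (a * Rabs h)) with (Rabs h) by (field; lra). unfold Rdiv in A3. lra. }
  specialize (Hk' D HD2). replace (g x + D)%C with (g (x + h)%R) in Hk' by (unfold D; ring).
  specialize (Hg2 h A2).
  replace (k (g (x + h)%R) - k (g x) - K * G * RtoC h)%C with
    ((k (g (x + h)%R) - k (g x) - K * D) + K * (g (x + h)%R - g x - G * RtoC h))%C by (unfold D; ring).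
  eapply Rle_trans; [apply Cmod_triangle|]. rewrite Cmod_mult.
  pose proof (Rabs_pos h). pose proof (Cmod_ge_0 K).
  apply Rle_trans with (eps / (2 * a) * (a * Rabs h) + Cmod K * (eps / (2 * b) * Rabs h)).
  - apply Rplus_le_compat. eapply Rle_trans; [exact Hk'|]. apply Rmult_le_compat_l; auto.
    left; apply Rdiv_lt_0_compat; lra. apply Rmult_le_compat_l; auto.
  - assert (Cmod K / b <= 1). { unfold Rdiv. apply Rmult_le_reg_r with b; auto. rewrite Rmult_assoc, Rinv_l by lra. unfold b; lra. }
    assert (E1 : eps / (2 * a) * (a * Rabs h) = eps / 2 * Rabs h) by (field; lra).
    assert (E2 : Cmod K * (eps / (2 * b) * Rabs h) = (Cmod K / b) * (eps/2 * Rabs h)) by (field; lra).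
    rewrite E1, E2. assert (0 <= eps / 2 * Rabs h) by nra. nra.
Qed.

Lemma rderiv_lin (z w : C) x : rderiv (fun y => z + RtoC y * w)%C x w.
Proof.
  intros eps Heps. exists 1. split; [lra|]. intros h _.
  replace (z + RtoC (x + h)%R * w - (z + RtoC x * w) - w * RtoC h)%C with (RtoC 0)
    by (rewrite RtoC_plus; ring).
  rewrite Cmod_0. pose proof (Rabs_pos h). nra.
Qed.


Definition term (d : nat -> R) (z : C) (k : nat) : C := Cmult (RtoC (d k)) (pow_n (cexp z) k).

Definition SG (d : nat -> R) (z : C) : C :=
  @lim (CompleteNormedModule.CompleteSpace C_AbsRing C_CompleteNormedModule)
    (filtermap (fun N => @sum_n C_AbelianMonoid (term d z) N) eventually).

Lemma Hfun_SG a z : Hfun a z = SG (fun k => a k ^ 2) z.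
Proof. reflexivity. Qed.

Definition CSer (u : nat -> C) (l : C) := @is_series C_AbsRing C_NormedModule u l.
Definition CexSer (u : nat -> C) := @ex_series C_AbsRing C_NormedModule u.

Lemma ball_C_Cmod (z y : C) (e : R) : @ball C_UniformSpace z e y -> Cmod (y - z) < 2 * e.
Proof.
  intros [H1 H2]. change (Rabs (snd y - snd z) < e) in H2. change (Rabs (fst y - fst z) < e) in H1.
  eapply Rle_lt_trans; [apply Cmod_le_abs|].
  destruct y, z; unfold Re, Im; simpl in *.
  replace (r + - r1) with (r - r1) by ring. replace (r0 + - r2) with (r0 - r2) by ring. lra.
Qed.

Lemma SG_is_series d z : CexSer (term d z) -> CSer (term d z) (SG d z).
Proof.
  intros [l Hl].
  set (F := filtermap (fun N => @sum_n C_AbelianMonoid (term d z) N) eventually).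
  assert (PF : ProperFilter F) by (apply filtermap_proper_filter, eventually_filter).
  assert (Hc : cauchy F).
  { intros eps. destruct (Hl (ball l (pos_div_2 eps))) as [N HN].
    { exists (pos_div_2 eps). auto. }
    exists l. exists N. intros n Hn. 
    specialize (HN n Hn). simpl in HN.
    eapply ball_le; [|exact HN]. simpl. destruct eps; simpl; lra. }
  pose proof (@complete_cauchy (CompleteNormedModule.CompleteSpace C_AbsRing C_CompleteNormedModule) F PF Hc) as HL.
  unfold CSer, SG. fold F.
  intros P [e He]. specialize (HL e). exact (filter_imp _ _ (fun x Hx => He x Hx) HL).
Qed.

Lemma CSer_ev u l : CSer u l -> forall eps, 0 < eps -> exists N, forall n, (N <= n)%nat ->
  Cmod (@sum_n C_AbelianMonoid u n - l) < eps.
Proof.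
  intros Hl eps He. destruct (Hl (ball l (mkposreal (eps/2) ltac:(lra)))) as [N HN].
  { exists (mkposreal (eps/2) ltac:(lra)). auto. }
  exists N. intros n Hn. specialize (HN n Hn). simpl in HN.
  apply ball_C_Cmod in HN. simpl in HN. replace (2 * (eps / 2)) with eps in HN by field. exact HN.
Qed.

Lemma RSer_ev b L : is_series b L -> forall eps, 0 < eps -> exists N, forall n, (N <= n)%nat ->
  Rabs (@sum_n R_AbelianMonoid b n - L) < eps.
Proof.
  intros Hl eps He. destruct (Hl (ball L (mkposreal eps He))) as [N HN].
  { exists (mkposreal eps He). auto. }
  exists N. intros n Hn. specialize (HN n Hn). simpl in HN. exact HN.
Qed.

Lemma sum_n_Cmod_le (u : nat -> C) (b : nat -> R) N :
  (forall n, Cmod (u n) <= b n) -> Cmod (@sum_n C_AbelianMonoid u N) <= sum_n b N.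
Proof.
  intros H. induction N.
  - rewrite !sum_O. apply H.
  - rewrite !sum_Sn. eapply Rle_trans; [apply Cmod_triangle|].
    apply Rplus_le_compat; auto.
Qed.

Lemma CSer_norm_le u l b L : CSer u l -> is_series b L -> (forall n, Cmod (u n) <= b n) ->
  Cmod l <= L.
Proof.
  intros Hu Hb Hle. apply Rnot_lt_le. intros Hlt.
  set (e := (Cmod l - L) / 2).
  assert (He : 0 < e) by (unfold e; lra).
  destruct (CSer_ev u l Hu e He) as [N1 H1]. destruct (RSer_ev b L Hb e He) as [N2 H2].
  specialize (H1 (N1 + N2)%nat ltac:(lia)). specialize (H2 (N1 + N2)%nat ltac:(lia)).
  pose proof (sum_n_Cmod_le u b (N1 + N2) Hle).
  pose proof (Cmod_triangle (@sum_n C_AbelianMonoid u (N1 + N2)) (l - @sum_n C_AbelianMonoid u (N1 + N2))%C).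
  replace (@sum_n C_AbelianMonoid u (N1 + N2) + (l - @sum_n C_AbelianMonoid u (N1 + N2)))%C with l in H0 by ring.
  assert (E : Cmod (l - @sum_n C_AbelianMonoid u (N1 + N2))%C = Cmod (@sum_n C_AbelianMonoid u (N1 + N2) - l)%C)
    by (rewrite <- Cmod_opp; f_equal; ring).
  rewrite E in H0.
  apply Rabs_lt_between in H2. unfold e in *. lra.
Qed.

Lemma Cmod_term d z n : 0 <= d n -> Cmod (term d z n) = d n * exp (INR n * Re z).
Proof.
  intros Hd. unfold term. rewrite Cmod_mult, Cmod_R, Rabs_right by lra.
  rewrite pow_n_cexp, Cmod_cexp. f_equal. destruct z; unfold Re, RtoC, Cmult; simpl. f_equal; ring.
Qed.

Definition Conv (d : nat -> R) (X : R) := ex_series (fun n => d n * exp (INR n * X)).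

Lemma term_ex d z X : (forall n, 0 <= d n) -> Conv d X -> Re z <= X -> CexSer (term d z).
Proof.
  intros Hd HC Hz. apply (@ex_series_le C_AbsRing C_CompleteNormedModule (term d z) (fun n => d n * exp (INR n * X))); auto.
  intros n. change (norm (term d z n)) with (Cmod (term d z n)).
  rewrite Cmod_term by auto. apply Rmult_le_compat_l; auto. apply exp_le_mono.
  apply Rmult_le_compat_l; auto. apply pos_INR.
Qed.

Lemma Conv_mono d X X' : (forall n, 0 <= d n) -> Conv d X -> X' <= X -> Conv d X'.
Proof.
  intros Hd HC Hle. apply (@ex_series_le R_AbsRing R_CompleteNormedModule _ (fun n => d n * exp (INR n * X))); auto.
  intros n. change (norm ?x) with (Rabs x). rewrite Rabs_right.
  - apply Rmult_le_compat_l; auto. apply exp_le_mono. apply Rmult_le_compat_l; auto. apply pos_INR.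
  - apply Rle_ge, Rmult_le_pos; auto. left; apply exp_pos.
Qed.

Lemma Conv_n d X X2 : (forall n, 0 <= d n) -> Conv d X2 -> X < X2 -> Conv (fun n => INR n * d n) X.
Proof.
  intros Hd HC Hlt.
  apply (@ex_series_le R_AbsRing R_CompleteNormedModule _ (fun n => / (X2 - X) * (d n * exp (INR n * X2)))).
  - intros n. change (norm ?x) with (Rabs x). pose proof (pos_INR n). pose proof (Hd n).
    pose proof (exp_pos (INR n * X)).
    rewrite Rabs_right by (apply Rle_ge; repeat apply Rmult_le_pos; lra).
    assert (E : exp (INR n * X2) = exp (INR n * X) * exp (INR n * (X2 - X))) by
      (rewrite <- exp_plus; f_equal; ring).
    rewrite E. pose proof (exp_ineq1_le (INR n * (X2 - X))).
    assert (INR n <= / (X2 - X) * exp (INR n * (X2 - X))).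
    { apply Rmult_le_reg_l with (X2 - X); [lra|]. rewrite <- Rmult_assoc, Rinv_r by lra. nra. }
    assert (0 <= d n * exp (INR n * X)) by nra.
    replace (/ (X2 - X) * (d n * (exp (INR n * X) * exp (INR n * (X2 - X))))) with
      ((/ (X2 - X) * exp (INR n * (X2 - X))) * (d n * exp (INR n * X))) by ring.
    replace (INR n * d n * exp (INR n * X)) with (INR n * (d n * exp (INR n * X))) by ring.
    apply Rmult_le_compat_r; auto.
  - apply (@ex_series_scal_l R_AbsRing R_NormedModule). exact HC.
Qed.

Lemma Im_sum_real (u : nat -> C) N : (forall n, Im (u n) = 0) -> Im (@sum_n C_AbelianMonoid u N) = 0.
Proof.
  intros H. induction N.
  - rewrite sum_O. apply H.
  - rewrite sum_Sn. change (Im (@sum_n C_AbelianMonoid u N + u (S N))%C = 0).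
    rewrite im_plus, IHN, H. ring.
Qed.

Lemma CSer_real u l : CSer u l -> (forall n, Im (u n) = 0) -> Im l = 0.
Proof.
  intros Hs Hr. apply Rabs_eq_0. apply Rle_antisym; [|apply Rabs_pos].
  apply Rnot_lt_le. intros Hp.
  destruct (CSer_ev u l Hs (Rabs (Im l)) Hp) as [N HN]. specialize (HN N (le_n N)).
  pose proof (Im_le_Cmod (@sum_n C_AbelianMonoid u N - l)%C). rewrite Im_sub in H.
  rewrite (Im_sum_real u N Hr) in H. rewrite Rminus_0_l, Rabs_Ropp in H. lra.
Qed.

Lemma SG_real d x : (forall n, 0 <= d n) -> Conv d x -> Im (SG d (RtoC x)) = 0.
Proof.
  intros Hd HC. apply (CSer_real (term d (RtoC x))).
  - apply SG_is_series. apply (term_ex d _ x); auto. unfold Re, RtoC; simpl; lra.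
  - intros n. unfold term. rewrite pow_n_cexp. unfold cexp, Im, Re, RtoC, Cmult; simpl.
    replace (INR n * 0 + 0 * x) with 0 by ring. rewrite sin_0. ring.
Qed.

Definition nd (d : nat -> R) : nat -> R := fun n => INR n * d n.

Lemma nd_pos d : (forall n, 0 <= d n) -> forall n, 0 <= nd d n.
Proof. intros H n. unfold nd. apply Rmult_le_pos; auto; apply pos_INR. Qed.

Lemma term_diff d z w n :
  (term d (z + w) n - term d z n - w * term (nd d) z n)%C =
  (RtoC (d n) * cexp (RtoC (INR n) * z) * (cexp (RtoC (INR n) * w) - 1 - RtoC (INR n) * w))%C.
Proof.
  unfold term, nd. rewrite !pow_n_cexp.
  replace (RtoC (INR n) * (z + w))%C with (RtoC (INR n) * z + RtoC (INR n) * w)%C by ring.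
  rewrite cexp_add, RtoC_mult. ring.
Qed.

Lemma SG_deriv d z X : (forall n, 0 <= d n) -> Conv d X -> Conv (nd d) X ->
  Conv (nd (nd d)) X -> Re z < X ->
  CDer (SG d) z (SG (nd d) z).
Proof.
  intros Hd C0 C1 C2 Hz.
  pose proof (nd_pos d Hd) as Hd1.
  apply cdiff_CDer.
  apply (quad_cdiff _ _ _ (X - Re z) (4 * Series (fun n => nd (nd d) n * exp (INR n * X)))); [lra|].
  intros w Hw.
  assert (Hzw : Re (z + w)%C <= X).
  { rewrite re_plus. pose proof (re_le_Cmod w). pose proof (Rle_abs (Re w)). lra. }
  pose proof (SG_is_series d (z + w)%C (term_ex d (z + w)%C X Hd C0 Hzw)) as S1.
  pose proof (SG_is_series d z (term_ex d z X Hd C0 ltac:(lra))) as S0.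
  pose proof (SG_is_series _ z (term_ex _ z X Hd1 C1 ltac:(lra))) as S2.
  assert (S : CSer (fun n => term d (z + w) n - term d z n - w * term (nd d) z n)%C
                   (SG d (z + w) - SG d z - w * SG (nd d) z)%C).
  { pose proof (@is_series_minus C_AbsRing C_NormedModule _ _ _ _ S1 S0) as S3.
    pose proof (@is_series_scal C_AbsRing C_NormedModule w _ _ S2) as S4.
    pose proof (@is_series_minus C_AbsRing C_NormedModule _ _ _ _ S3 S4) as S5.
    exact S5. }
  replace (SG (nd d) z * w)%C with (w * SG (nd d) z)%C by ring.
  apply (CSer_norm_le _ _ (fun n => scal (4 * Cmod w ^ 2) (nd (nd d) n * exp (INR n * X))) _ S).
  - replace (4 * Series (fun n => nd (nd d) n * exp (INR n * X)) * Cmod w ^ 2) with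
      (scal (4 * Cmod w ^ 2) (Series (fun n => nd (nd d) n * exp (INR n * X)))) by
      (change scal with Rmult; simpl; ring).
    apply (@is_series_scal R_AbsRing R_NormedModule). apply Series_correct. exact C2.
  - intros n. rewrite term_diff. change (scal ?a ?b) with (a * b).
    rewrite !Cmod_mult, Cmod_R, Cmod_cexp, Rabs_right by (apply Rle_ge; auto).
    pose proof (cexp_est (RtoC (INR n) * w)%C). rewrite Cmod_mult, Cmod_R, Rabs_right in H
      by (apply Rle_ge, pos_INR).
    assert (Re (RtoC (INR n) * z)%C = INR n * Re z) by (destruct z; unfold Re, RtoC, Cmult; simpl; ring).
    rewrite H0.
    pose proof (pos_INR n). pose proof (Cmod_ge_0 w). pose proof (Hd n).
    pose proof (exp_pos (INR n * Re z)).
    apply Rle_trans with (d n * exp (INR n * Re z) * (4 * (INR n * Cmod w) ^ 2 * exp (INR n * Cmod w))).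
    { apply Rmult_le_compat_l; auto. apply Rmult_le_pos; lra. }
    assert (exp (INR n * Re z) * exp (INR n * Cmod w) <= exp (INR n * X)).
    { rewrite <- exp_plus. apply exp_le_mono. rewrite <- Rmult_plus_distr_l.
      apply Rmult_le_compat_l; auto. lra. }
    unfold nd. 
    replace (d n * exp (INR n * Re z) * (4 * (INR n * Cmod w) ^ 2 * exp (INR n * Cmod w))) with
      ((4 * Cmod w ^ 2 * (INR n * (INR n * d n))) * (exp (INR n * Re z) * exp (INR n * Cmod w))) by ring.
    apply Rle_trans with ((4 * Cmod w ^ 2 * (INR n * (INR n * d n))) * exp (INR n * X)); [|right; ring].
    apply Rmult_le_compat_l; auto. assert (0 <= Cmod w ^ 2) by nra.
    apply Rmult_le_pos; [lra|]. apply Rmult_le_pos; auto. apply Rmult_le_pos; auto.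
Qed.


Definition ccont (f : C -> C) (z : C) := forall eps, 0 < eps -> exists del, 0 < del /\
  forall w, Cmod (w - z) < del -> Cmod (f w - f z) < eps.

Lemma cdiff_ccont f z l : cdiff f z l -> ccont f z.
Proof.
  intros H eps Heps. destruct (H 1 ltac:(lra)) as [d [Hd Hw]].
  exists (Rmin d (eps / (Cmod l + 2))). split.
  { apply Rmin_pos; auto. apply Rdiv_lt_0_compat; auto. pose proof (Cmod_ge_0 l); lra. }
  intros w Hw'. assert (Hl := Cmod_ge_0 l).
  assert (A1 : Cmod (w - z) < d) by (eapply Rlt_le_trans; [exact Hw'| apply Rmin_l]).
  assert (A2 : Cmod (w - z) < eps / (Cmod l + 2)) by (eapply Rlt_le_trans; [exact Hw'| apply Rmin_r]).
  specialize (Hw (w - z)%C A1). replace (z + (w - z))%C with w in Hw by ring.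
  replace (f w - f z)%C with ((f w - f z - l * (w - z)) + l * (w - z))%C by ring.
  eapply Rle_lt_trans; [apply Cmod_triangle|]. rewrite Cmod_mult.
  pose proof (Cmod_ge_0 (w - z)).
  apply Rle_lt_trans with ((Cmod l + 1) * Cmod (w - z)); [nra|].
  apply Rle_lt_trans with ((Cmod l + 2) * Cmod (w - z)); [nra|].
  apply Rmult_lt_reg_l with (/ (Cmod l + 2)). apply Rinv_0_lt_compat; lra.
  rewrite <- Rmult_assoc, Rinv_l by lra. rewrite Rmult_1_l. unfold Rdiv in A2. lra.
Qed.

Definition ee (v : R) : C := (cos v, sin v).
Definition pp (z0 : C) (rho s v : R) : C := (z0 + RtoC (s * rho) * ee v)%C.

Lemma Cmod_ee v : Cmod (ee v) = 1.
Proof.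
  unfold ee, Cmod; cbn [fst snd]. rewrite Rplus_comm.
  replace (sin v ^ 2 + cos v ^ 2) with 1. apply sqrt_1.
  rewrite <- (sin2_cos2 v). unfold Rsqr; ring.
Qed.

Lemma Cmod_pp z0 rho s v : Cmod (pp z0 rho s v - z0) = Rabs (s * rho).
Proof.
  unfold pp. replace (z0 + RtoC (s * rho) * ee v - z0)%C with (RtoC (s * rho) * ee v)%C by ring.
  rewrite Cmod_mult, Cmod_R, Cmod_ee. ring.
Qed.

Lemma cos_lip v t : Rabs (cos v - cos t) <= Rabs (v - t).
Proof.
  destruct (MVT_abs cos (fun y => - sin y) t v) as [c [Hc _]].
  { intros; apply derivable_pt_lim_cos. }
  rewrite Hc, Rabs_Ropp. rewrite <- (Rmult_1_l (Rabs (v - t))) at 2.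
  apply Rmult_le_compat_r; [apply Rabs_pos|]. pose proof (SIN_bound c). apply Rabs_le; lra.
Qed.

Lemma sin_lip v t : Rabs (sin v - sin t) <= Rabs (v - t).
Proof.
  destruct (MVT_abs sin cos t v) as [c [Hc _]].
  { intros; apply derivable_pt_lim_sin. }
  rewrite Hc. rewrite <- (Rmult_1_l (Rabs (v - t))) at 2.
  apply Rmult_le_compat_r; [apply Rabs_pos|]. pose proof (COS_bound c). apply Rabs_le; lra.
Qed.

Lemma ee_lip v t : Cmod (ee v - ee t) <= 2 * Rabs (v - t).
Proof.
  eapply Rle_trans; [apply Cmod_le_abs|]. unfold ee, Re, Im; simpl.
  replace (cos v + - cos t) with (cos v - cos t) by ring.
  replace (sin v + - sin t) with (sin v - sin t) by ring.
  pose proof (cos_lip v t); pose proof (sin_lip v t). lra.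
Qed.

Lemma rderiv_ext g g' x G : (forall y, g y = g' y) -> rderiv g x G -> rderiv g' x G.
Proof.
  intros E H eps He. destruct (H eps He) as [d [Hd Hw]]. exists d; split; auto.
  intros h Hh. rewrite <- !E. auto.
Qed.

Lemma rderiv_affine g x G (a b : C) : rderiv g x G -> rderiv (fun y => a + b * g y)%C x (b * G)%C.
Proof.
  intros H eps He.
  destruct (H (eps / (Cmod b + 1)) ltac:(apply Rdiv_lt_0_compat; [lra| pose proof (Cmod_ge_0 b); lra]))
    as [d [Hd Hw]].
  exists d; split; auto. intros h Hh. specialize (Hw h Hh).
  replace (a + b * g (x + h)%R - (a + b * g x) - b * G * RtoC h)%C with
    (b * (g (x + h)%R - g x - G * RtoC h))%C by ring.
  rewrite Cmod_mult. pose proof (Cmod_ge_0 b). pose proof (Rabs_pos h).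
  apply Rle_trans with (Cmod b * (eps / (Cmod b + 1) * Rabs h)).
  apply Rmult_le_compat_l; auto.
  replace (Cmod b * (eps / (Cmod b + 1) * Rabs h)) with ((Cmod b / (Cmod b + 1)) * (eps * Rabs h))
    by (field; lra).
  assert (Cmod b / (Cmod b + 1) <= 1).
  { unfold Rdiv. apply Rmult_le_reg_r with (Cmod b + 1); [lra|].
    rewrite Rmult_assoc, Rinv_l by lra. lra. }
  assert (0 <= eps * Rabs h) by nra. nra.
Qed.

Lemma ee_rderiv v : rderiv ee v (Ci * ee v)%C.
Proof.
  apply rderiv_comps.
  - unfold ee, Ci, Re; simpl. replace (0 * cos v - 1 * sin v) with (- sin v) by ring.
    apply is_derive_cos.
  - unfold ee, Ci, Im; simpl. replace (0 * sin v + 1 * cos v) with (cos v) by ring.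
    apply is_derive_sin.
Qed.

Lemma pp_rderiv_v z0 rho s v : rderiv (pp z0 rho s) v (RtoC (s * rho) * (Ci * ee v))%C.
Proof. unfold pp. apply (rderiv_affine ee v _ z0 (RtoC (s * rho))). apply ee_rderiv. Qed.

Lemma pp_rderiv_s z0 rho s v : rderiv (fun u => pp z0 rho u v) s (RtoC rho * ee v)%C.
Proof.
  apply (rderiv_ext (fun u => z0 + RtoC u * (RtoC rho * ee v))%C).
  - intros y. unfold pp. rewrite RtoC_mult. ring.
  - apply rderiv_lin.
Qed.

Lemma cont_eps (f : R -> R) x : (forall eps, 0 < eps -> exists del, 0 < del /\
  forall y, Rabs (y - x) < del -> Rabs (f y - f x) < eps) -> continuous f x.
Proof.
  intros H P [eps HP]. destruct (H eps (cond_pos eps)) as [d [Hd Hy]].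
  exists (mkposreal d Hd). intros y Hyd. apply HP. apply Hy. exact Hyd.
Qed.

Definition MVhyp (k k' : C -> C) (z0 : C) (rho rho' : R) :=
  0 < rho < rho' /\ forall w, 0 < Cmod (w - z0) < rho' -> cdiff k w (k' w) /\ ccont k' w.

Lemma in_ann z0 rho rho' s v : 0 < rho < rho' -> 0 < s -> s < rho' / rho ->
  0 < Cmod (pp z0 rho s v - z0) < rho'.
Proof.
  intros Hr Hs Hc. rewrite Cmod_pp. rewrite Rabs_right by nra. split; [nra|].
  apply Rmult_lt_compat_r with (r := rho) in Hc; [|lra].
  unfold Rdiv in Hc. rewrite Rmult_assoc, Rinv_l, Rmult_1_r in Hc by lra. lra.
Qed.

Lemma L1 k k' z0 rho rho' s v : MVhyp k k' z0 rho rho' -> 0 < s -> s < rho' / rho ->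
  is_derive (fun u => Re (k (pp z0 rho u v))) s (Re (k' (pp z0 rho s v) * (RtoC rho * ee v)))%C.
Proof.
  intros [Hr H] Hs Hc. apply (rderiv_Re (fun u => k (pp z0 rho u v))).
  apply rderiv_chain; [|apply pp_rderiv_s].
  apply H. apply in_ann; auto.
Qed.

Lemma L2 k k' z0 rho rho' s v : MVhyp k k' z0 rho rho' -> 0 < s -> s < rho' / rho ->
  rderiv (fun v => k (pp z0 rho s v)) v (k' (pp z0 rho s v) * (RtoC (s * rho) * (Ci * ee v)))%C.
Proof.
  intros [Hr H] Hs Hc. apply rderiv_chain; [|apply pp_rderiv_v].
  apply H. apply in_ann; auto.
Qed.

Lemma L3 k k' z0 rho rho' s t : MVhyp k k' z0 rho rho' -> 0 < s -> s < rho' / rho ->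
  forall eps, 0 < eps -> exists del, 0 < del /\ forall u v, Rabs (u - s) < del -> Rabs (v - t) < del ->
  Cmod (k' (pp z0 rho u v) - k' (pp z0 rho s t)) < eps.
Proof.
  intros [Hr H] Hs Hc eps He.
  destruct (proj2 (H _ (in_ann z0 rho rho' s t Hr Hs Hc)) eps He) as [d1 [Hd1 Hk]].
  set (m := rho + 2 * s * rho + 1).
  assert (Hm : 0 < m) by (unfold m; nra).
  exists (d1 / m). split; [apply Rdiv_lt_0_compat; auto|].
  intros u v Hu Hv. apply Hk.
  unfold pp.
  replace (z0 + RtoC (u * rho) * ee v - (z0 + RtoC (s * rho) * ee t))%C with
    (RtoC ((u - s) * rho) * ee v + RtoC (s * rho) * (ee v - ee t))%C
    by (rewrite !RtoC_mult, RtoC_minus; ring).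
  eapply Rle_lt_trans; [apply Cmod_triangle|]. rewrite !Cmod_mult, !Cmod_R, Cmod_ee.
  pose proof (ee_lip v t). rewrite !Rabs_mult, (Rabs_right rho), (Rabs_right s) by lra.
  pose proof (Rabs_pos (u - s)). pose proof (Rabs_pos (v - t)).
  apply Rle_lt_trans with (rho * Rabs (u - s) + s * rho * (2 * Rabs (v - t))).
  { apply Rplus_le_compat. nra. apply Rmult_le_compat_l; [nra|auto]. }
  apply Rle_lt_trans with (m * (d1 / m) - d1 / m).
  2:{ replace (m * (d1 / m)) with d1 by (field; lra). assert (0 < d1 / m) by (apply Rdiv_lt_0_compat; auto). lra. }
  replace (m * (d1 / m) - d1 / m) with ((m - 1) * (d1 / m)) by ring. replace (m - 1) with (rho + 2 * s * rho) by (unfold m; ring).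
  set (q := d1 / m) in *. assert (0 < s * rho) by nra. assert (rho * Rabs (u - s) <= rho * q) by (apply Rmult_le_compat_l; lra). assert (s * rho * Rabs (v - t) <= s * rho * q) by (apply Rmult_le_compat_l; lra). nra.
Qed.

Lemma Re_le_Cmod' (z : C) : Rabs (Re z) <= Cmod z.
Proof. apply re_le_Cmod. Qed.

Lemma L4 k k' z0 rho rho' s t : MVhyp k k' z0 rho rho' -> 0 < s -> s < rho' / rho ->
  continuity_2d_pt (fun u v => Derive (fun z => Re (k (pp z0 rho z v))) u) s t.
Proof.
  intros HM Hs Hc eps. pose proof HM as [[Hr1 Hr2] _].
  set (K := Cmod (k' (pp z0 rho s t))).
  assert (HK : 0 <= K) by apply Cmod_ge_0.
  set (e1 := eps / (2 * rho)).
  assert (He1 : 0 < e1) by (unfold e1; apply Rdiv_lt_0_compat; [apply cond_pos| lra]).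
  destruct (L3 k k' z0 rho rho' s t HM Hs Hc e1 He1) as [d [Hd H3]].
  set (d2 := eps / (2 * rho * (2 * K + 1))).
  assert (Hd2 : 0 < d2) by (unfold d2; apply Rdiv_lt_0_compat; [apply cond_pos| nra]).
  set (d3 := Rmin s (rho' / rho - s)).
  assert (Hd3 : 0 < d3) by (apply Rmin_pos; lra).
  exists (mkposreal (Rmin d (Rmin d2 d3)) ltac:(apply Rmin_pos; [auto| apply Rmin_pos; auto])).
  intros u v Hu Hv. simpl in Hu, Hv.
  assert (Hu1 : Rabs (u - s) < d) by (eapply Rlt_le_trans; [exact Hu| apply Rmin_l]).
  assert (Hv1 : Rabs (v - t) < d) by (eapply Rlt_le_trans; [exact Hv| apply Rmin_l]).
  assert (Hv2 : Rabs (v - t) < d2) by (eapply Rlt_le_trans; [exact Hv|]; eapply Rle_trans; [apply Rmin_r| apply Rmin_l]).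
  assert (Hu3 : Rabs (u - s) < d3) by (eapply Rlt_le_trans; [exact Hu|]; eapply Rle_trans; [apply Rmin_r| apply Rmin_r]).
  assert (Hu0 : 0 < u /\ u < rho' / rho).
  { unfold d3 in Hu3. pose proof (Rmin_l s (rho' / rho - s)). pose proof (Rmin_r s (rho' / rho - s)).
    apply Rabs_def2 in Hu3. lra. }
  assert (E1 : Derive (fun z => Re (k (pp z0 rho z v))) u = Re (k' (pp z0 rho u v) * (RtoC rho * ee v))%C)
    by (apply is_derive_unique; apply (L1 k k' z0 rho rho' u v HM (proj1 Hu0) (proj2 Hu0))).
  assert (E2 : Derive (fun z => Re (k (pp z0 rho z t))) s = Re (k' (pp z0 rho s t) * (RtoC rho * ee t))%C)
    by (apply is_derive_unique; apply (L1 k k' z0 rho rho' s t HM Hs Hc)).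
  rewrite E1, E2.
  rewrite <- Re_sub. eapply Rle_lt_trans; [apply Re_le_Cmod'|].
  replace (k' (pp z0 rho u v) * (RtoC rho * ee v) - k' (pp z0 rho s t) * (RtoC rho * ee t))%C with
    (RtoC rho * ((k' (pp z0 rho u v) - k' (pp z0 rho s t)) * ee v) +
     RtoC rho * (k' (pp z0 rho s t) * (ee v - ee t)))%C by ring.
  eapply Rle_lt_trans; [apply Cmod_triangle|]. rewrite !Cmod_mult, Cmod_R, Cmod_ee, Rabs_right by lra.
  specialize (H3 u v Hu1 Hv1). pose proof (ee_lip v t). fold K.
  pose proof (Cmod_ge_0 (k' (pp z0 rho u v) - k' (pp z0 rho s t))%C).
  pose proof (Cmod_ge_0 (ee v - ee t)%C). pose proof (Rabs_pos (v - t)).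
  assert (A : rho * (Cmod (k' (pp z0 rho u v) - k' (pp z0 rho s t)) * 1) < eps / 2).
  { replace (eps / 2) with (rho * e1) by (unfold e1; field; lra). nra. }
  assert (B : rho * (K * Cmod (ee v - ee t)) <= eps / 2).
  { apply Rle_trans with (rho * (K * (2 * d2))).
    - apply Rmult_le_compat_l; [lra|]. apply Rmult_le_compat_l; auto. lra.
    - unfold d2. apply Rle_trans with (eps / 2 * (2 * K / (2 * K + 1))).
      + right. field. nra.
      + assert (2 * K / (2 * K + 1) <= 1).
        { unfold Rdiv. apply Rmult_le_reg_r with (2 * K + 1); [lra|].
          rewrite Rmult_assoc, Rinv_l by lra. lra. }
        pose proof (cond_pos eps). assert (0 <= 2 * K / (2 * K + 1)) by (apply Rdiv_le_0_compat; lra).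
        nra. }
  lra.
Qed.

Lemma L5 k k' z0 rho rho' s v : MVhyp k k' z0 rho rho' -> 0 < s -> s < rho' / rho ->
  continuous (fun v => Im (k' (pp z0 rho s v) * (RtoC (s * rho) * (Ci * ee v))))%C v.
Proof.
  intros HM Hs Hc. pose proof HM as [[Hr1 Hr2] _]. apply cont_eps. intros eps He.
  set (K := Cmod (k' (pp z0 rho s v))). assert (HK : 0 <= K) by apply Cmod_ge_0.
  set (m := s * rho). assert (Hm : 0 < m) by (unfold m; nra).
  destruct (L3 k k' z0 rho rho' s v HM Hs Hc (eps / (2 * m)) ltac:(apply Rdiv_lt_0_compat; lra)) as [d [Hd H3]].
  set (d2 := eps / (2 * m * (2 * K + 1))).
  assert (Hd2 : 0 < d2) by (unfold d2; apply Rdiv_lt_0_compat; [lra| nra]).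
  exists (Rmin d d2). split; [apply Rmin_pos; auto|]. intros y Hy.
  assert (Hy1 : Rabs (y - v) < d) by (eapply Rlt_le_trans; [exact Hy| apply Rmin_l]).
  assert (Hy2 : Rabs (y - v) < d2) by (eapply Rlt_le_trans; [exact Hy| apply Rmin_r]).
  rewrite <- Im_sub. eapply Rle_lt_trans; [apply Im_le_Cmod|].
  replace (k' (pp z0 rho s y) * (RtoC m * (Ci * ee y)) -
           k' (pp z0 rho s v) * (RtoC m * (Ci * ee v)))%C with
    (RtoC m * Ci * ((k' (pp z0 rho s y) - k' (pp z0 rho s v)) * ee y) +
     RtoC m * Ci * (k' (pp z0 rho s v) * (ee y - ee v)))%C by ring.
  eapply Rle_lt_trans; [apply Cmod_triangle|]. rewrite !Cmod_mult, Cmod_R, Cmod_Ci, Cmod_ee, Rabs_right by lra.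
  assert (Hs0 : Rabs (s - s) < d) by (rewrite Rminus_diag, Rabs_R0; auto).
  specialize (H3 s y Hs0 Hy1). pose proof (ee_lip y v). fold K.
  pose proof (Cmod_ge_0 (k' (pp z0 rho s y) - k' (pp z0 rho s v))%C).
  pose proof (Cmod_ge_0 (ee y - ee v)%C). pose proof (Rabs_pos (y - v)).
  assert (A : m * 1 * (Cmod (k' (pp z0 rho s y) - k' (pp z0 rho s v)) * 1) < eps / 2).
  { replace (eps / 2) with (m * (eps / (2 * m))) by (field; lra). nra. }
  assert (B : m * 1 * (K * Cmod (ee y - ee v)) <= eps / 2).
  { apply Rle_trans with (m * (K * (2 * d2))).
    - rewrite Rmult_1_r. apply Rmult_le_compat_l; [lra|]. apply Rmult_le_compat_l; auto. lra.
    - unfold d2. apply Rle_trans with (eps / 2 * (2 * K / (2 * K + 1))).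
      + right. field. nra.
      + assert (2 * K / (2 * K + 1) <= 1).
        { unfold Rdiv. apply Rmult_le_reg_r with (2 * K + 1); [lra|].
          rewrite Rmult_assoc, Rinv_l by lra. lra. }
        assert (0 <= 2 * K / (2 * K + 1)) by (apply Rdiv_le_0_compat; lra).
        nra. }
  lra.
Qed.

Lemma L6 k k' z0 rho rho' s : MVhyp k k' z0 rho rho' -> 0 < s -> s < rho' / rho ->
  ex_RInt (fun v => Re (k (pp z0 rho s v))) 0 (2 * PI).
Proof.
  intros HM Hs Hc. apply (@ex_RInt_continuous R_CompleteNormedModule). intros v _.
  assert (HD : ex_derive (fun v => Re (k (pp z0 rho s v))) v).
  { eexists. apply (rderiv_Re (fun v => k (pp z0 rho s v))). apply (L2 k k' z0 rho rho' s v HM Hs Hc). }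
  exact (@ex_derive_continuous R_AbsRing R_NormedModule _ v HD).
Qed.

Definition MM k z0 rho (s : R) := RInt (fun v => Re (k (pp z0 rho s v))) 0 (2 * PI).

Lemma pp_2PI z0 rho s : pp z0 rho s (2 * PI) = pp z0 rho s 0.
Proof. unfold pp, ee. rewrite cos_2PI, sin_2PI, cos_0, sin_0. reflexivity. Qed.

Lemma L7 k k' z0 rho rho' s : MVhyp k k' z0 rho rho' -> 0 < s -> s < rho' / rho ->
  is_derive (MM k z0 rho) s 0.
Proof.
  intros HM Hs Hc. pose proof HM as [[Hr1 Hr2] _].
  set (d3 := Rmin s (rho' / rho - s)).
  assert (Hd3 : 0 < d3) by (apply Rmin_pos; lra).
  assert (Hin : forall x0, Rabs (x0 - s) < d3 -> 0 < x0 /\ x0 < rho' / rho).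
  { intros x0 Hx. unfold d3 in Hx. pose proof (Rmin_l s (rho' / rho - s)). pose proof (Rmin_r s (rho' / rho - s)).
    apply Rabs_def2 in Hx. lra. }
  assert (HP := is_derive_RInt_param (fun u v => Re (k (pp z0 rho u v))) 0 (2 * PI) s).
  set (g := fun t => Im (k' (pp z0 rho s t) * (RtoC (s * rho) * (Ci * ee t)))%C).
  assert (IG : is_RInt g 0 (2 * PI) 0).
  { assert (FT := @is_RInt_derive R_CompleteNormedModule (fun v => Im (k (pp z0 rho s v))) g 0 (2 * PI)).
    assert (IG0 := FT ltac:(intros x _; apply rderiv_Im; apply (L2 k k' z0 rho rho' s x HM Hs Hc))
                      ltac:(intros x _; apply (L5 k k' z0 rho rho' s x HM Hs Hc))).
    simpl in IG0. rewrite pp_2PI, minus_eq_zero in IG0. exact IG0. }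
  assert (D0 : RInt (fun t => Derive (fun u => Re (k (pp z0 rho u t))) s) 0 (2 * PI) = 0).
  { apply (@is_RInt_unique R_CompleteNormedModule). apply (@is_RInt_ext R_NormedModule (fun t => scal (/ s) (g t))).
    - intros t _. assert (E1 : Derive (fun z => Re (k (pp z0 rho z t))) s = Re (k' (pp z0 rho s t) * (RtoC rho * ee t))%C)
        by (apply is_derive_unique; apply (L1 k k' z0 rho rho' s t HM Hs Hc)). rewrite E1.
      unfold g. change (scal (/ s) ?b) with (/ s * b).
      destruct (k' (pp z0 rho s t)), (ee t). unfold Re, Im, RtoC, Ci, Cmult; simpl. field. lra.
    - assert (IG2 := @is_RInt_scal R_NormedModule g 0 (2 * PI) (/ s) 0 IG).
      replace (@scal R_Ring (NormedModule.ModuleSpace R_AbsRing R_NormedModule) (/ s) 0) with 0 in IG2 by (symmetry; apply Rmult_0_r). exact IG2. }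
  rewrite <- D0. unfold MM. apply HP.
  - exists (mkposreal d3 Hd3). intros x0 Hx0 t _. eexists. 
    apply (L1 k k' z0 rho rho' x0 t HM); apply Hin; exact Hx0.
  - intros t _. apply (L4 k k' z0 rho rho' s t HM Hs Hc).
  - exists (mkposreal d3 Hd3). intros y Hy. apply (L6 k k' z0 rho rho' y HM); apply Hin; exact Hy.
Qed.

Lemma L8 k k' z0 rho rho' s : MVhyp k k' z0 rho rho' -> 0 < s -> s <= 1 ->
  MM k z0 rho 1 = MM k z0 rho s.
Proof.
  intros HM Hs H1. pose proof HM as [[Hr1 Hr2] _].
  assert (Hc : 1 < rho' / rho).
  { apply Rmult_lt_reg_r with rho; auto. unfold Rdiv. rewrite Rmult_assoc, Rinv_l by lra. lra. }
  assert (FT := @is_RInt_derive R_CompleteNormedModule (MM k z0 rho) (fun _ => 0) s 1).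
  assert (E : is_RInt (fun _ : R => 0) s 1 (minus (MM k z0 rho 1) (MM k z0 rho s))).
  { apply FT.
    - intros x Hx. rewrite Rmin_left, Rmax_right in Hx by lra. apply (L7 k k' z0 rho rho'); auto; lra.
    - intros x _. apply continuous_const. }
  apply (@is_RInt_unique R_CompleteNormedModule) in E.
  assert (E2 := @RInt_const R_CompleteNormedModule s 1 0).
  rewrite E in E2. change (MM k z0 rho 1 - MM k z0 rho s = (1 - s) * 0) in E2. lra.
Qed.

Lemma eq_of_eps (x y C0 : R) : (forall eps, 0 < eps -> Rabs (x - y) <= C0 * eps) -> x = y.
Proof.
  intros H. destruct (Req_dec x y) as [|Hn]; auto. exfalso.
  assert (Hp : 0 < Rabs (x - y)) by (apply Rabs_pos_lt; lra).
  set (e := Rabs (x - y) / (2 * (Rabs C0 + 1))).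
  assert (He : 0 < e) by (unfold e; apply Rdiv_lt_0_compat; [auto| pose proof (Rabs_pos C0); lra]).
  specialize (H e He). pose proof (Rle_abs C0).
  assert (C0 * e <= (Rabs C0 + 1) * e) by (apply Rmult_le_compat_r; lra).
  assert ((Rabs C0 + 1) * e = Rabs (x - y) / 2) by (unfold e; field; pose proof (Rabs_pos C0); lra).
  lra.
Qed.

Lemma MVP k k' z0 rho rho' : MVhyp k k' z0 rho rho' -> ccont k z0 ->
  MM k z0 rho 1 = 2 * PI * Re (k z0).
Proof.
  intros HM Hk. pose proof HM as [[Hr1 Hr2] _].
  assert (Hc : 1 < rho' / rho).
  { apply Rmult_lt_reg_r with rho; auto. unfold Rdiv. rewrite Rmult_assoc, Rinv_l by lra. lra. }
  apply (eq_of_eps _ _ (2 * PI)). intros eps He.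
  destruct (Hk eps He) as [d [Hd Hkd]].
  set (s := Rmin 1 (d / (2 * rho))).
  assert (Hs : 0 < s) by (apply Rmin_pos; [lra| apply Rdiv_lt_0_compat; lra]).
  assert (Hs1 : s <= 1) by apply Rmin_l.
  assert (Hs2 : s * rho < d).
  { apply Rle_lt_trans with (d / (2 * rho) * rho). apply Rmult_le_compat_r; [lra| apply Rmin_r].
    replace (d / (2 * rho) * rho) with (d / 2) by (field; lra). lra. }
  rewrite (L8 k k' z0 rho rho' s HM Hs Hs1).
  assert (EX := L6 k k' z0 rho rho' s HM Hs ltac:(lra)).
  apply (@RInt_correct R_CompleteNormedModule) in EX.
  assert (EC := @is_RInt_const R_NormedModule 0 (2 * PI) (Re (k z0))).
  assert (EM := @is_RInt_minus R_NormedModule _ _ _ _ _ _ EX EC).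
  assert (Hpt : forall x, 0 <= x <= 2 * PI ->
     norm (minus (Re (k (pp z0 rho s x))) (Re (k z0))) <= eps).
  { intros x _. change (Rabs (Re (k (pp z0 rho s x)) - Re (k z0)) <= eps).
    rewrite <- Re_sub. eapply Rle_trans; [apply re_le_Cmod|]. left. apply Hkd.
    rewrite Cmod_pp, Rabs_right by nra. lra. }
  assert (B := @norm_RInt_le_const R_NormedModule _ 0 (2 * PI) _ eps
    ltac:(pose proof PI_RGT_0; lra) Hpt EM).
  change (Rabs (MM k z0 rho s - (2 * PI - 0) * Re (k z0)) <= (2 * PI - 0) * eps) in B.
  rewrite Rminus_0_r in B. exact B.
Qed.


Lemma ccont_const c z : ccont (fun _ => c) z.
Proof. intros e He. exists 1. split; [lra|]. intros. replace (c - c)%C with (RtoC 0) by ring. rewrite Cmod_0. auto. Qed.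

Lemma ccont_id z : ccont (fun x => x) z.
Proof. intros e He. exists e. split; auto. Qed.

Lemma ccont_plus f g z : ccont f z -> ccont g z -> ccont (fun x => f x + g x)%C z.
Proof.
  intros Hf Hg e He. destruct (Hf (e/2) ltac:(lra)) as [d1 [Hd1 H1]]. destruct (Hg (e/2) ltac:(lra)) as [d2 [Hd2 H2]].
  exists (Rmin d1 d2). split; [apply Rmin_pos; auto|]. intros w Hw.
  specialize (H1 w ltac:(eapply Rlt_le_trans; [exact Hw| apply Rmin_l])).
  specialize (H2 w ltac:(eapply Rlt_le_trans; [exact Hw| apply Rmin_r])).
  replace (f w + g w - (f z + g z))%C with ((f w - f z) + (g w - g z))%C by ring.
  eapply Rle_lt_trans; [apply Cmod_triangle|]. lra.
Qed.

Lemma ccont_opp f z : ccont f z -> ccont (fun x => - f x)%C z.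
Proof.
  intros Hf e He. destruct (Hf e He) as [d [Hd H]]. exists d; split; auto. intros w Hw.
  replace (- f w - - f z)%C with (- (f w - f z))%C by ring. rewrite Cmod_opp. auto.
Qed.

Lemma ccont_mult f g z : ccont f z -> ccont g z -> ccont (fun x => f x * g x)%C z.
Proof.
  intros Hf Hg e He.
  set (A := Cmod (f z)). set (B := Cmod (g z)).
  assert (HA : 0 <= A) by apply Cmod_ge_0. assert (HB : 0 <= B) by apply Cmod_ge_0.
  set (e1 := Rmin (1/2) (e / (A + B + 1))).
  assert (He1 : 0 < e1) by (apply Rmin_pos; [lra| apply Rdiv_lt_0_compat; lra]).
  destruct (Hf e1 He1) as [d1 [Hd1 H1]]. destruct (Hg e1 He1) as [d2 [Hd2 H2]].
  exists (Rmin d1 d2). split; [apply Rmin_pos; auto|]. intros w Hw.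
  specialize (H1 w ltac:(eapply Rlt_le_trans; [exact Hw| apply Rmin_l])).
  specialize (H2 w ltac:(eapply Rlt_le_trans; [exact Hw| apply Rmin_r])).
  replace (f w * g w - f z * g z)%C with ((f w - f z) * (g w - g z) + (f w - f z) * g z + f z * (g w - g z))%C by ring.
  eapply Rle_lt_trans; [apply Cmod_triangle|]. eapply Rle_lt_trans; [apply Rplus_le_compat_r, Cmod_triangle|].
  rewrite !Cmod_mult. fold A B.
  pose proof (Cmod_ge_0 (f w - f z)%C). pose proof (Cmod_ge_0 (g w - g z)%C).
  assert (e1 <= 1/2) by apply Rmin_l. assert (e1 <= e / (A + B + 1)) by apply Rmin_r.
  assert (e1 * (A + B + 1) <= e).
  { apply Rle_trans with (e / (A + B + 1) * (A + B + 1)). apply Rmult_le_compat_r; lra. right; field; lra. }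
  apply Rle_lt_trans with (e1 * e1 + e1 * B + A * e1).
  { apply Rplus_le_compat; [apply Rplus_le_compat|]; try nra. }
  nra.
Qed.

Lemma ccont_comp f g z : ccont g z -> ccont f (g z) -> ccont (fun x => f (g x)) z.
Proof.
  intros Hg Hf e He. destruct (Hf e He) as [d1 [Hd1 H1]]. destruct (Hg d1 Hd1) as [d2 [Hd2 H2]].
  exists d2. split; [auto|]. intros w Hw. apply H1. apply H2. auto.
Qed.

Lemma ccont_ext_loc f g z : (exists d, 0 < d /\ forall w, Cmod (w - z) < d -> f w = g w) ->
  ccont f z -> ccont g z.
Proof.
  intros [d [Hd E]] Hf e He. destruct (Hf e He) as [d1 [Hd1 H1]].
  exists (Rmin d d1). split; [apply Rmin_pos; auto|]. intros w Hw.
  rewrite <- (E w ltac:(eapply Rlt_le_trans; [exact Hw| apply Rmin_l])).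
  rewrite <- (E z ltac:(replace (z - z)%C with (RtoC 0) by ring; rewrite Cmod_0; auto)).
  apply H1. eapply Rlt_le_trans; [exact Hw| apply Rmin_r].
Qed.

Lemma ccont_inv (z : C) : z <> RtoC 0 -> ccont Cinv z.
Proof. intros Hz. apply (cdiff_ccont _ _ _ (CDer_cdiff _ _ _ (CDer_inv z Hz))). Qed.

Lemma ccont_minus f g z : ccont f z -> ccont g z -> ccont (fun x => f x - g x)%C z.
Proof. intros Hf Hg. apply (ccont_plus f (fun x => - g x)%C); auto. apply ccont_opp; auto. Qed.

Lemma CDer_val f z l l' : CDer f z l -> l = l' -> CDer f z l'.
Proof. intros H E; subst; auto. Qed.

Lemma Cmod_pos_neq (w z0 : C) : 0 < Cmod (w - z0) -> w <> z0.
Proof. intros H E. subst. replace (z0 - z0)%C with (RtoC 0) in H by ring. rewrite Cmod_0 in H. lra. Qed.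

Lemma Cminus_neq (w z0 : C) : w <> z0 -> (w - z0)%C <> RtoC 0.
Proof. intros H E. apply H. apply Ceq_minus in E. auto. Qed.

Lemma cauchy_est (g g' : C -> C) z0 rho rho' M :
  0 < rho < rho' ->
  (forall w, Cmod (w - z0) < rho' -> cdiff g w (g' w) /\ ccont g' w) ->
  (forall w, Cmod (w - z0) <= rho -> Cmod (g w) <= M) ->
  Cmod (g' z0) <= 2 * M / rho.
Proof.
  intros Hr Hd HB.
  set (c := Cconj (g' z0)).
  set (q := fun x => (c * ((g x - g z0) * Cinv (x - z0)))%C).
  set (kc := fun x => if Ceq_dec x z0 then (c * g' z0)%C else q x).
  set (kc' := fun x => (c * ((g' x * (x - z0) - (g x - g z0)) * Cinv ((x - z0) * (x - z0))))%C).
  assert (HM : MVhyp kc kc' z0 rho rho').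
  { split; [lra|]. intros w [Hw0 Hw1]. pose proof (Cmod_pos_neq w z0 Hw0) as Hwz.
    pose proof (Cminus_neq w z0 Hwz) as Hwz'.
    destruct (Hd w Hw1) as [Hgw Hgw'].
    split.
    - apply CDer_cdiff. apply (CDer_ext_loc q kc).
      { exists (Cmod (w - z0)). split; auto. intros x Hx. unfold kc.
        destruct (Ceq_dec x z0) as [->|]; auto. exfalso.
        replace (z0 - w)%C with (- (w - z0))%C in Hx by ring. rewrite Cmod_opp in Hx. lra. }
      assert (D1 := CDer_minus g (fun _ => g z0) w _ _ (cdiff_CDer _ _ _ Hgw) (CDer_const (g z0) w)).
      assert (D2 := CDer_minus (fun x => x) (fun _ => z0) w _ _ (CDer_id w) (CDer_const z0 w)).
      assert (D3 := CDer_comp Cinv (fun x => x - z0)%C w _ _ (CDer_inv (w - z0)%C Hwz') D2).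
      assert (D4 := CDer_mult _ _ w _ _ D1 D3).
      assert (D5 := CDer_mult _ _ w _ _ (CDer_const c w) D4).
      apply (CDer_val _ _ _ _ D5). unfold kc'. field. auto.
    - unfold kc'. apply ccont_mult; [apply ccont_const|]. apply ccont_mult.
      + apply ccont_minus; [apply ccont_mult; [auto| apply ccont_minus; [apply ccont_id| apply ccont_const]]|].
        apply ccont_minus; [apply (cdiff_ccont _ _ _ Hgw)| apply ccont_const].
      + apply (ccont_comp Cinv (fun x => (x - z0) * (x - z0))%C).
        * apply ccont_mult; apply ccont_minus; try apply ccont_id; apply ccont_const.
        * apply ccont_inv. apply Cmult_neq_0; auto. }
  assert (Hk : ccont kc z0).
  { intros eps He. pose proof (proj1 (Hd z0 ltac:(replace (z0 - z0)%C with (RtoC 0) by ring; rewrite Cmod_0; lra)))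
      as Hg0.
    pose proof (Cmod_ge_0 c).
    destruct (Hg0 (eps / (Cmod c + 1)) ltac:(apply Rdiv_lt_0_compat; lra)) as [d [Hd0 Hdd]].
    exists d. split; auto. intros w Hw. unfold kc.
    destruct (Ceq_dec z0 z0) as [_|]; [|congruence].
    destruct (Ceq_dec w z0) as [->|Hn].
    { replace (c * g' z0 - c * g' z0)%C with (RtoC 0) by ring. rewrite Cmod_0. auto. }
    pose proof (Cminus_neq w z0 Hn) as Hn'. specialize (Hdd (w - z0)%C Hw).
    replace (z0 + (w - z0))%C with w in Hdd by ring.
    unfold q. replace (c * ((g w - g z0) * / (w - z0)) - c * g' z0)%C with
      (c * (g w - g z0 - g' z0 * (w - z0)) / (w - z0))%C by (field; auto).
    rewrite Cmod_div, Cmod_mult by auto. pose proof (proj1 (Cmod_gt_0 _) Hn').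
    apply Rle_lt_trans with (Cmod c * (eps / (Cmod c + 1) * Cmod (w - z0)) / Cmod (w - z0)).
    { unfold Rdiv. apply Rmult_le_compat_r; [left; apply Rinv_0_lt_compat; auto|].
      apply Rmult_le_compat_l; auto. }
    replace (Cmod c * (eps / (Cmod c + 1) * Cmod (w - z0)) / Cmod (w - z0)) with
      (eps * (Cmod c / (Cmod c + 1))) by (field; lra).
    assert (Cmod c / (Cmod c + 1) < 1).
    { unfold Rdiv. apply Rmult_lt_reg_r with (Cmod c + 1); [lra|].
      rewrite Rmult_assoc, Rinv_l by lra. lra. }
    nra. }
  pose proof (MVP kc kc' z0 rho rho' HM Hk) as HV.
  assert (Hc : 1 < rho' / rho).
  { apply Rmult_lt_reg_r with rho; [lra|]. unfold Rdiv. rewrite Rmult_assoc, Rinv_l by lra. lra. }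
  assert (EX := L6 kc kc' z0 rho rho' 1 HM ltac:(lra) Hc).
  apply (@RInt_correct R_CompleteNormedModule) in EX.
  assert (HM0 : 0 <= M).
  { eapply Rle_trans; [apply Cmod_ge_0| apply (HB z0)]. replace (z0 - z0)%C with (RtoC 0) by ring. rewrite Cmod_0; lra. }
  assert (Hpt : forall x, 0 <= x <= 2 * PI -> norm (Re (kc (pp z0 rho 1 x))) <= Cmod c * (2 * M / rho)).
  { intros x _. change (Rabs (Re (kc (pp z0 rho 1 x))) <= Cmod c * (2 * M / rho)).
    eapply Rle_trans; [apply re_le_Cmod|].
    assert (Hp : Cmod (pp z0 rho 1 x - z0) = rho) by (rewrite Cmod_pp, Rmult_1_l, Rabs_right; lra).
    assert (Hpn : pp z0 rho 1 x <> z0) by (apply Cmod_pos_neq; lra).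
    unfold kc. destruct (Ceq_dec (pp z0 rho 1 x) z0) as [E|_]; [congruence|].
    unfold q. rewrite !Cmod_mult, Cmod_inv by (apply Cminus_neq; auto). rewrite Hp.
    assert (Cmod (g (pp z0 rho 1 x) - g z0) <= 2 * M).
    { eapply Rle_trans; [apply Cmod_triangle|]. rewrite Cmod_opp.
      pose proof (HB (pp z0 rho 1 x) ltac:(lra)).
      pose proof (HB z0 ltac:(replace (z0 - z0)%C with (RtoC 0) by ring; rewrite Cmod_0; lra)). lra. }
    apply Rmult_le_compat_l; [apply Cmod_ge_0|]. unfold Rdiv.
    apply Rmult_le_compat_r; [left; apply Rinv_0_lt_compat; lra| auto]. }
  assert (B := @norm_RInt_le_const R_NormedModule _ 0 (2 * PI) _ _
    ltac:(pose proof PI_RGT_0; lra) Hpt EX).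
  change (Rabs (MM kc z0 rho 1) <= (2 * PI - 0) * (Cmod c * (2 * M / rho))) in B.
  rewrite HV in B. unfold kc in B. destruct (Ceq_dec z0 z0) as [_|]; [|congruence].
  assert (E : Re (c * g' z0)%C = Cmod (g' z0) ^ 2).
  { unfold c. destruct (g' z0) as [x y]. unfold Cconj, Re, Cmod, Cmult; cbn [fst snd].
    rewrite pow2_sqrt by nra. ring. }
  rewrite E in B. unfold c in B. rewrite Cmod_conj in B.
  pose proof PI_RGT_0. pose proof (Cmod_ge_0 (g' z0)).
  rewrite Rabs_right in B by (apply Rle_ge; apply Rmult_le_pos; [lra| nra]).
  destruct (Req_dec (Cmod (g' z0)) 0) as [E0|E0].
  { rewrite E0. apply Rmult_le_pos; [lra| left; apply Rinv_0_lt_compat; lra]. }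
  assert (0 < Cmod (g' z0)) by lra.
  apply Rmult_le_reg_l with (2 * PI * Cmod (g' z0)); [nra|].
  replace (2 * PI * Cmod (g' z0) * Cmod (g' z0)) with (2 * PI * Cmod (g' z0) ^ 2) by ring.
  replace (2 * PI * Cmod (g' z0) * (2 * M / rho)) with ((2 * PI - 0) * (Cmod (g' z0) * (2 * M / rho))) by ring.
  exact B.
Qed.


Lemma pow_exp (X : R) (k : nat) : exp X ^ k = exp (INR k * X).
Proof.
  induction k.
  - simpl. rewrite Rmult_0_l, exp_0. reflexivity.
  - rewrite S_INR. simpl. rewrite IHk, <- exp_plus. f_equal. ring.
Qed.

Lemma Rbar_between (X : R) (tG : Rbar) : Rbar_lt X tG -> exists X2, X < X2 /\ Rbar_lt X2 tG.
Proof.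
  destruct tG as [y| |]; simpl; intros H.
  - exists ((X + y) / 2). split; lra.
  - exists (X + 1). split; [lra|exact I].
  - contradiction.
Qed.

Lemma Rbar_lt_le_trans' (x y : R) (tG : Rbar) : x <= y -> Rbar_lt y tG -> Rbar_lt x tG.
Proof. destruct tG; simpl; intros; auto; lra. Qed.

Definition cc (a : nat -> R) : nat -> R := fun k => a k ^ 2.

Lemma cc_pos a : forall n, 0 <= cc a n.
Proof. intros n. unfold cc. nra. Qed.

Lemma conv_cc a tG : std_hyp a tG -> forall X : R, Rbar_lt X tG -> Conv (cc a) X.
Proof.
  intros [_ [_ Hr]] X HX.
  assert (Hin : Rbar_lt (Rabs (exp X)) (CV_radius (fun n => a n ^ 2))).
  { rewrite Rabs_right by (left; apply exp_pos).
    destruct Hr as [[E1 E2]|[E1 E2]]; rewrite E1; subst tG; simpl in *; auto.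
    rewrite <- exp_0. apply exp_increasing. auto. }
  apply CV_radius_inside in Hin. unfold Conv, cc.
  destruct Hin as [l Hl]. exists l. revert Hl. apply is_series_ext. intros n.
  change (scal (pow_n (exp X) n) (a n ^ 2)) with (pow_n (exp X) n * a n ^ 2).
  rewrite pow_n_pow, pow_exp. apply Rmult_comm.
Qed.

Lemma conv_nd d tG : (forall n, 0 <= d n) -> (forall X : R, Rbar_lt X tG -> Conv d X) ->
  forall X : R, Rbar_lt X tG -> Conv (nd d) X.
Proof.
  intros Hd HC X HX. destruct (Rbar_between X tG HX) as [X2 [H1 H2]].
  apply (Conv_n d X X2); auto.
Qed.

Lemma H_deriv a tG z : std_hyp a tG -> Rbar_lt (Re z) tG ->
  CDer (Hfun a) z (SG (nd (cc a)) z) /\ CDer (SG (nd (cc a))) z (SG (nd (nd (cc a))) z).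
Proof.
  intros Hs Hz. destruct (Rbar_between _ tG Hz) as [X [H1 H2]].
  pose proof (cc_pos a) as P0. pose proof (nd_pos _ P0) as P1. pose proof (nd_pos _ P1) as P2.
  pose proof (conv_cc a tG Hs) as C0.
  pose proof (conv_nd _ tG P0 C0) as C1. pose proof (conv_nd _ tG P1 C1) as C2.
  pose proof (conv_nd _ tG P2 C2) as C3.
  split.
  - apply (SG_deriv (cc a) z X); auto.
  - apply (SG_deriv (nd (cc a)) z X); auto.
Qed.

Lemma Afun_eq a tG z : std_hyp a tG -> Rbar_lt (Re z) tG ->
  Afun a z = (SG (nd (cc a)) z * Cinv (Hfun a z))%C.
Proof.
  intros Hs Hz. unfold Afun. destruct (H_deriv a tG z Hs Hz) as [D _].
  rewrite (is_C_derive_unique _ _ _ (CDer_is_derive _ _ _ D)). reflexivity.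
Qed.

Lemma Im_div_real (u v : C) : Im u = 0 -> Im v = 0 -> Im (u / v)%C = 0.
Proof.
  destruct u as [u1 u2], v as [v1 v2]. unfold Im; simpl. intros -> ->.
  unfold Cdiv, Cinv, Cmult; simpl. unfold Rdiv. ring.
Qed.

Lemma Afun_real a tG (x : R) : std_hyp a tG -> Rbar_lt x tG -> Im (Afun a (RtoC x)) = 0.
Proof.
  intros Hs Hx. assert (Hx' : Rbar_lt (Re (RtoC x)) tG) by exact Hx.
  rewrite (Afun_eq a tG _ Hs Hx'). change (Im (SG (nd (cc a)) (RtoC x) / Hfun a (RtoC x))%C = 0).
  pose proof (cc_pos a) as P0. pose proof (nd_pos _ P0) as P1.
  pose proof (conv_cc a tG Hs) as C0. pose proof (conv_nd _ tG P0 C0) as C1.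
  apply Im_div_real.
  - apply SG_real; auto.
  - rewrite Hfun_SG. apply SG_real; auto.
Qed.

Lemma Bfun_real a tG (t : R) : std_hyp a tG -> Rbar_lt t tG -> Im (Bfun a (RtoC t)) = 0.
Proof.
  intros Hs Ht. unfold Bfun, C_derive, C_lim. unfold Im; cbn [snd fst RtoC].
  destruct (Rbar_between t tG Ht) as [X2 [H1 H2]].
  assert (E : Lim (fun x => snd ((Afun a (x, 0) - Afun a (RtoC t)) / ((x, 0) - RtoC t))%C) t = 0).
  { unfold Lim. rewrite <- (Lim_seq_const 0). apply Lim_seq_ext_loc.
    pose proof (is_lim_seq_Rbar_loc_seq t) as HL.
    destruct (HL (ball t (mkposreal (X2 - t) ltac:(lra)))) as [N HN].
    { exists (mkposreal (X2 - t) ltac:(lra)). auto. }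
    exists N. intros n Hn. specialize (HN n Hn). simpl in HN.
    change (Rabs (Rbar_loc_seq t n - t) < X2 - t) in HN. apply Rabs_def2 in HN.
    apply (Im_div_real _ _).
    - rewrite Im_sub. change (Rbar_loc_seq t n, 0) with (RtoC (Rbar_loc_seq t n)).
      rewrite !(Afun_real a tG); auto; [ring|]. apply (Rbar_lt_le_trans' _ X2); auto; lra.
    - unfold RtoC, Im; simpl. ring. }
  rewrite E. reflexivity.
Qed.


Lemma Cdiv_0_r (x : C) : (x / RtoC 0)%C = RtoC 0.
Proof.
  destruct x as [x1 x2]. unfold Cdiv, Cinv, Cmult, RtoC; simpl. unfold Rdiv. f_equal; ring.
Qed.

Lemma Cmod_Ci_mul (th : R) : Cmod (Ci * RtoC th)%C = Rabs th.
Proof. rewrite Cmod_mult, Cmod_Ci, Cmod_R. ring. Qed.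

Lemma Cmod_real_nonneg (B : C) : Im B = 0 -> 0 <= Re B -> Cmod B = Re B.
Proof.
  destruct B as [x y]. unfold Im, Re; simpl. intros -> Hx.
  change (Cmod (RtoC x) = x). rewrite Cmod_R. apply Rabs_right; lra.
Qed.

Section Local.
Variables (a : nat -> R) (tG : Rbar) (t dt eta e : R) (L : C -> C).
Hypothesis Hs : std_hyp a tG.
Hypothesis Htd : Rbar_lt (t + dt) tG.
Hypothesis Hdt : 0 < dt.
Hypothesis Heta : 0 < eta.
Hypothesis Heta1 : eta <= 1.
Hypothesis He : 0 < e.
Hypothesis HL0 : L (RtoC 0) = RtoC 0.
Hypothesis HL : forall tau : C, Cmod tau <= eta * dt ->
  @ex_derive C_AbsRing C_NormedModule L tau /\
  cexp (L tau) = (Hfun a (RtoC t + tau) / Hfun a (RtoC t))%C /\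
  Cmod (L tau - (tau * Afun a (RtoC t) + / 2 * (tau * tau) * Bfun a (RtoC t)))%C
    <= e * Cmod tau ^ 2 * Re (Bfun a (RtoC t)).

Let r := eta * dt.
Let A := Afun a (RtoC t).
Let B := Bfun a (RtoC t).

Lemma Hr : 0 < r.
Proof. unfold r; nra. Qed.
Lemma Hrdt : r <= dt.
Proof. unfold r; nra. Qed.

Lemma Ht : Rbar_lt t tG.
Proof. apply (Rbar_lt_le_trans' _ (t + dt)); auto; lra. Qed.

Lemma Hin (tau : C) : Cmod tau < r -> Rbar_lt (Re (RtoC t + tau)%C) tG.
Proof.
  intros H. apply (Rbar_lt_le_trans' _ (t + dt)); auto. rewrite re_plus.
  pose proof (re_le_Cmod tau). pose proof (Rle_abs (Re tau)). pose proof Hrdt.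
  unfold Re at 1, RtoC; simpl. lra.
Qed.

Lemma HAr : Im A = 0.
Proof. apply (Afun_real a tG); auto. apply Ht. Qed.
Lemma HBr : Im B = 0.
Proof. apply (Bfun_real a tG); auto. apply Ht. Qed.

Lemma Hne : Hfun a (RtoC t) <> RtoC 0.
Proof.
  intros E. destruct (HL (RtoC 0)) as [_ [H2 _]].
  { rewrite Cmod_0. pose proof Hr. unfold r in *. lra. }
  rewrite HL0, cexp_0, E, Cdiv_0_r in H2. apply C1_nz. exact H2.
Qed.

Lemma HReB : 0 <= Re B.
Proof.
  destruct (HL (RtoC r)) as [_ [_ H3]].
  { rewrite Cmod_R, Rabs_right; unfold r; [lra|]. pose proof Hr. unfold r in *; lra. }
  pose proof (Cmod_ge_0 (L (RtoC r) - (RtoC r * A + / 2 * (RtoC r * RtoC r) * B))%C).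
  rewrite Cmod_R, Rabs_right in H3 by (pose proof Hr; lra).
  pose proof Hr. apply Rnot_lt_le. intros Hn. fold A B in H3.
  assert (0 < e * r ^ 2) by (apply Rmult_lt_0_compat; nra). nra.
Qed.

Lemma HBmod : Cmod B = Re B.
Proof. apply Cmod_real_nonneg; [apply HBr| apply HReB]. Qed.

Lemma HHeq (tau : C) : Cmod tau < r -> Hfun a (RtoC t + tau)%C = (Hfun a (RtoC t) * cexp (L tau))%C.
Proof.
  intros H. destruct (HL tau) as [_ [H2 _]]. { unfold r in *; lra. }
  rewrite H2. field. apply Hne.
Qed.

Lemma HLd (tau : C) : Cmod tau < r -> CDer L tau (Afun a (RtoC t + tau)%C).
Proof.
  intros Htau. destruct (HL tau) as [H1 _]. { unfold r in *; lra. }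
  apply C_derive_correct in H1; [|exact (RtoC 0)].
  apply is_derive_CDer in H1. set (Lp := C_derive L tau) in *.
  destruct (H_deriv a tG (RtoC t + tau)%C Hs (Hin tau Htau)) as [D0 _].
  assert (D1 := CDer_comp (Hfun a) (fun x => RtoC t + x)%C tau _ _ D0
     (CDer_plus _ _ tau _ _ (CDer_const (RtoC t) tau) (CDer_id tau))).
  assert (D2 := CDer_mult _ _ tau _ _ (CDer_const (Hfun a (RtoC t)) tau)
     (CDer_comp cexp L tau _ _ (CDer_cexp (L tau)) H1)).
  assert (D3 : CDer (fun x => Hfun a (RtoC t + x)%C) tau
     (0 * cexp (L tau) + Hfun a (RtoC t) * (Lp * cexp (L tau)))%C).
  { apply (CDer_ext_loc (fun x => Hfun a (RtoC t) * cexp (L x))%C); auto.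
    exists (r - Cmod tau). split; [lra|]. intros w Hw. symmetry. apply HHeq.
    pose proof (Cmod_triangle (w - tau) tau). replace (w - tau + tau)%C with w in H by ring. lra. }
  pose proof (CDer_unique _ _ _ _ D1 D3) as E.
  rewrite (Afun_eq a tG _ Hs (Hin tau Htau)).
  rewrite (HHeq tau Htau).
  assert (Hc : cexp (L tau) <> RtoC 0) by apply cexp_neq0.
  pose proof Hne.
  assert (E' : SG (nd (cc a)) (RtoC t + tau)%C = (Hfun a (RtoC t) * (Lp * cexp (L tau)))%C).
  { transitivity ((RtoC 0 + RtoC 1) * SG (nd (cc a)) (RtoC t + tau)%C)%C; [ring|]. rewrite E. ring. }
  rewrite E'.
  replace (Hfun a (RtoC t) * (Lp * cexp (L tau)) * / (Hfun a (RtoC t) * cexp (L tau)))%C with Lp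
    by (field; auto).
  exact H1.
Qed.

Lemma Cmod_lt_shift (w tau : C) (d : R) : Cmod (w - tau) < d - Cmod tau -> Cmod w < d.
Proof.
  intros H. pose proof (Cmod_triangle (w - tau) tau). replace (w - tau + tau)%C with w in H0 by ring. lra.
Qed.

Lemma HAc (tau : C) : Cmod tau < r -> ccont (fun x => Afun a (RtoC t + x)%C) tau.
Proof.
  intros Htau.
  apply (ccont_ext_loc (fun x => SG (nd (cc a)) (RtoC t + x)%C * Cinv (Hfun a (RtoC t + x)%C))%C).
  { exists (r - Cmod tau). split; [lra|]. intros w Hw. symmetry. apply (Afun_eq a tG); auto.
    apply Hin. apply (Cmod_lt_shift w tau). auto. }
  destruct (H_deriv a tG (RtoC t + tau)%C Hs (Hin tau Htau)) as [D0 D1].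
  assert (Tc : ccont (fun x => RtoC t + x)%C tau) by (apply ccont_plus; [apply ccont_const| apply ccont_id]).
  apply ccont_mult.
  - apply (ccont_comp (SG (nd (cc a))) (fun x => RtoC t + x)%C); auto.
    apply (cdiff_ccont _ _ _ (CDer_cdiff _ _ _ D1)).
  - apply (ccont_comp Cinv (fun x => Hfun a (RtoC t + x)%C)).
    + apply (ccont_comp (Hfun a) (fun x => RtoC t + x)%C); auto.
      apply (cdiff_ccont _ _ _ (CDer_cdiff _ _ _ D0)).
    + apply ccont_inv. rewrite (HHeq tau Htau). apply Cmult_neq_0; [apply Hne| apply cexp_neq0].
Qed.

Let h := fun tau => (L tau - (tau * A + / 2 * (tau * tau) * B))%C.
Let h' := fun tau => (Afun a (RtoC t + tau)%C - A - tau * B)%C.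

Lemma Hh (tau : C) : Cmod tau <= r -> Cmod (h tau) <= e * Cmod tau ^ 2 * Re B.
Proof. intros H. apply (HL tau). unfold r in H. lra. Qed.

Lemma Hhd (w : C) : Cmod w < r -> cdiff h w (h' w) /\ ccont h' w.
Proof.
  intros Hw. split.
  - apply CDer_cdiff. unfold h, h'.
    assert (P1 := CDer_mult _ _ w _ _ (CDer_id w) (CDer_const A w)).
    assert (P2 := CDer_mult _ _ w _ _ (CDer_const (/ 2)%C w) (CDer_mult _ _ w _ _ (CDer_id w) (CDer_id w))).
    assert (P3 := CDer_mult _ _ w _ _ P2 (CDer_const B w)).
    assert (P4 := CDer_minus _ _ w _ _ (HLd w Hw) (CDer_plus _ _ w _ _ P1 P3)).
    apply (CDer_val _ _ _ _ P4). field.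
  - unfold h'. apply ccont_minus; [apply ccont_minus; [apply HAc; auto| apply ccont_const]|].
    apply ccont_mult; [apply ccont_id| apply ccont_const].
Qed.


Lemma Hfirst (th : R) : th <> 0 -> Rabs th <= r / 4 ->
  Cmod (h' (Ci * RtoC th)%C) <= 8 * e * Re B * Rabs th.
Proof.
  intros Hn Hth. pose proof (Rabs_pos_lt th Hn) as Hp. pose proof Hr as Hr0.
  pose proof (HReB) as HB0.
  assert (CE := cauchy_est h h' (Ci * RtoC th)%C (Rabs th) (2 * Rabs th) (e * (2 * Rabs th) ^ 2 * Re B)).
  assert (Cmod (h' (Ci * RtoC th)%C) <= 2 * (e * (2 * Rabs th) ^ 2 * Re B) / Rabs th).
  { apply CE.
    - lra.
    - intros w Hw. apply Hhd. apply (Cmod_lt_shift w (Ci * RtoC th)%C).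
      rewrite Cmod_Ci_mul. lra.
    - intros w Hw. pose proof (Cmod_triangle (w - Ci * RtoC th) (Ci * RtoC th))%C.
      replace (w - Ci * RtoC th + Ci * RtoC th)%C with w in H by ring. rewrite Cmod_Ci_mul in H.
      eapply Rle_trans; [apply Hh; lra|]. pose proof (Cmod_ge_0 w).
      apply Rmult_le_compat_r; auto. apply Rmult_le_compat_l; [lra|]. apply pow_incr. lra. }
  replace (8 * e * Re B * Rabs th) with (2 * (e * (2 * Rabs th) ^ 2 * Re B) / Rabs th) by (field; lra).
  auto.
Qed.

Lemma local_main (th : R) : Rabs th <= r / 4 ->
  (1 - 8 * e) * Re B * Rabs th <= Cmod (Afun a (Cplus (RtoC t) (Cmult Ci (RtoC th))) - A)
  /\ Cmod (Afun a (Cplus (RtoC t) (Cmult Ci (RtoC th))) - A) <= (1 + 8 * e) * Re B * Rabs th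
  /\ (1 - 8 * e) / 2 * th ^ 2 * Re B <= RInt (fun phi => Im (Afun a (Cplus (RtoC t) (Cmult Ci (RtoC phi))))) 0 th
  /\ RInt (fun phi => Im (Afun a (Cplus (RtoC t) (Cmult Ci (RtoC phi))))) 0 th <= (1 + 8 * e) / 2 * th ^ 2 * Re B.
Proof.
  intros Hth. pose proof HReB as HB0. pose proof Hr as Hr0.
  destruct (Req_dec th 0) as [->|Hn].
  { replace (Cplus (RtoC t) (Cmult Ci (RtoC 0))) with (RtoC t) by ring.
    fold A. replace (A - A)%C with (RtoC 0) by ring. rewrite Cmod_0, Rabs_R0.
    replace (RInt _ 0 0) with 0 by (rewrite RInt_point; reflexivity).
    repeat split; right; ring. }
  pose proof (Rabs_pos_lt th Hn) as Hp.
  assert (E1 : (Afun a (Cplus (RtoC t) (Cmult Ci (RtoC th))) - A)%C = (Ci * RtoC th * B + h' (Ci * RtoC th))%C)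
    by (unfold h'; ring).
  assert (E2 : Cmod (Ci * RtoC th * B)%C = Re B * Rabs th) by (rewrite Cmod_mult, Cmod_Ci_mul, HBmod; ring).
  pose proof (Hfirst th Hn Hth) as F.
  split; [|split].
  - rewrite E1. pose proof (Cmod_triangle (Ci * RtoC th * B + h' (Ci * RtoC th)) (- h' (Ci * RtoC th)))%C.
    rewrite Cmod_opp in H. replace (Ci * RtoC th * B + h' (Ci * RtoC th) + - h' (Ci * RtoC th))%C with
      (Ci * RtoC th * B)%C in H by ring. lra.
  - rewrite E1. eapply Rle_trans; [apply Cmod_triangle|]. lra.
  - set (z0 := (Ci * RtoC th)%C).
    assert (Hz0 : Cmod z0 = Rabs th) by apply Cmod_Ci_mul.
    assert (IR : RInt (fun phi => Im (Afun a (Cplus (RtoC t) (Cmult Ci (RtoC phi))))) 0 th = - Re (L z0)).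
    { set (f := fun phi => Re (L (Ci * RtoC phi)%C)).
      set (df := fun phi => - Im (Afun a (RtoC t + Ci * RtoC phi)%C)).
      assert (Hb : forall x, Rmin 0 th <= x <= Rmax 0 th -> Cmod (Ci * RtoC x)%C < r).
      { intros x Hx. rewrite Cmod_Ci_mul. unfold Rmin, Rmax in Hx.
        destruct (Rle_dec 0 th).
        - rewrite Rabs_right in Hth by lra. rewrite Rabs_right by lra. lra.
        - rewrite Rabs_left in Hth by lra. rewrite Rabs_left1 by lra. lra. }
      assert (FT := @is_RInt_derive R_CompleteNormedModule f df 0 th).
      assert (D : forall x, Rmin 0 th <= x <= Rmax 0 th -> is_derive f x (df x)).
      { intros x Hx. 
        assert (P : rderiv (fun y => Ci * RtoC y)%C x Ci).
        { apply (rderiv_ext (fun y => RtoC 0 + RtoC y * Ci)%C); [intros; ring| apply rderiv_lin]. }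
        assert (RD := rderiv_chain L (fun y => Ci * RtoC y)%C x _ _ (CDer_cdiff _ _ _ (HLd _ (Hb x Hx))) P).
        assert (RD2 := rderiv_Re _ _ _ RD).
        replace (df x) with (Re (Afun a (RtoC t + Ci * RtoC x)%C * Ci)%C).
        + exact RD2.
        + unfold df. destruct (Afun a (RtoC t + Ci * RtoC x)%C). unfold Re, Im, Ci, Cmult; simpl. ring. }
      assert (Cn : forall x, Rmin 0 th <= x <= Rmax 0 th -> continuous df x).
      { intros x Hx. apply cont_eps. intros eps Heps.
        destruct (HAc _ (Hb x Hx) eps Heps) as [d [Hd Hc]].
        exists d. split; auto. intros y Hy. unfold df.
        replace (- Im (Afun a (RtoC t + Ci * RtoC y)%C) - - Im (Afun a (RtoC t + Ci * RtoC x)%C)) with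
          (- (Im (Afun a (RtoC t + Ci * RtoC y)%C - Afun a (RtoC t + Ci * RtoC x)%C)%C)) by (rewrite Im_sub; ring).
        rewrite Rabs_Ropp. eapply Rle_lt_trans; [apply Im_le_Cmod|]. apply Hc.
        replace (Ci * RtoC y - Ci * RtoC x)%C with (Ci * RtoC (y - x))%C by (rewrite RtoC_minus; ring).
        rewrite Cmod_Ci_mul. auto. }
      specialize (FT D Cn).
      assert (F0 : f 0 = 0).
      { unfold f. replace (Ci * RtoC 0)%C with (RtoC 0) by ring. rewrite HL0. reflexivity. }
      assert (FT2 := @is_RInt_opp R_NormedModule _ _ _ _ FT).
      apply (@is_RInt_unique R_CompleteNormedModule).
      replace (- Re (L z0)) with (opp (minus (f th) (f 0))).
      2:{ rewrite F0. change (- (f th - 0) = - Re (L z0)). unfold f. fold z0. ring. }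
      apply (@is_RInt_ext R_NormedModule (fun y => opp (df y))); auto.
      intros x _. unfold df. change (- - Im (Afun a (RtoC t + Ci * RtoC x)%C) = Im (Afun a (RtoC t + Ci * RtoC x)%C)).
      ring. }
    rewrite IR.
    assert (EL : L z0 = (h z0 + (z0 * A + / 2 * (z0 * z0) * B))%C) by (unfold h; ring).
    assert (ER : Re (z0 * A + / 2 * (z0 * z0) * B)%C = - (th ^ 2 * Re B) / 2).
    { pose proof HAr as HA1. pose proof HBr as HB1. unfold z0.
      destruct A as [a1 a2]. destruct B as [b1 b2]. unfold Re, Im in *; simpl in *. subst.
      unfold Cinv, Cmult, Cplus, Ci, RtoC; simpl. field. }
    rewrite EL, re_plus, ER.
    pose proof (re_le_Cmod (h z0)).
    assert (Cmod (h z0) <= e * th ^ 2 * Re B).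
    { rewrite <- (pow2_abs th), <- Hz0. apply Hh. rewrite Hz0. lra. }
    pose proof (Rle_abs (Re (h z0))). pose proof (Rabs_pos (Re (h z0))).
    assert (Rabs (Re (h z0)) <= e * th ^ 2 * Re B) by lra.
    apply Rabs_le_between' in H2 || idtac.
    assert (- (e * th ^ 2 * Re B) <= Re (h z0) <= e * th ^ 2 * Re B) by (apply Rabs_le_between; auto).
    assert (0 <= e * th ^ 2 * Re B) by (pose proof (pow2_ge_0 th); apply Rmult_le_pos; [nra|auto]).
    assert (0 <= th ^ 2 * Re B) by (pose proof (pow2_ge_0 th); nra).
    split; nra.
Qed.

End Local.



Theorem lemma2p3 (a : nat -> R) (tG : Rbar) (T : R -> Prop) (delta : R -> R) :
  std_hyp a tG ->
  (forall t : R, T t -> Rbar_lt (Finite t) tG) ->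
  local_delta_admissible a tG T delta ->
  forall eps, 0 < eps ->
    exists eta, 0 < eta /\
    exists t0 : R, Rbar_lt (Finite t0) tG /\
    forall t : R, T t -> t0 < t ->
    forall theta : R, Rabs theta <= eta / 2 * delta t ->
      (1 - eps) * Re (Bfun a (RtoC t)) * Rabs theta
        <= Cmod (Afun a (Cplus (RtoC t) (Cmult Ci (RtoC theta))) - Afun a (RtoC t))
      /\ Cmod (Afun a (Cplus (RtoC t) (Cmult Ci (RtoC theta))) - Afun a (RtoC t))
        <= (1 + eps) * Re (Bfun a (RtoC t)) * Rabs theta
      /\ (1 - eps) / 2 * theta ^ 2 * Re (Bfun a (RtoC t))
        <= RInt (fun phi => Im (Afun a (Cplus (RtoC t) (Cmult Ci (RtoC phi))))) 0 theta
      /\ RInt (fun phi => Im (Afun a (Cplus (RtoC t) (Cmult Ci (RtoC phi))))) 0 theta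
        <= (1 + eps) / 2 * theta ^ 2 * Re (Bfun a (RtoC t)).
Proof.
  intros Hs HT [Hdel Hadm] eps Heps.
  destruct (Hadm (eps / 8) ltac:(lra)) as [eta [Heta [t0 [Ht0 Hmain]]]].
  assert (Hm : 0 < Rmin eta 1) by (apply Rmin_pos; lra).
  exists (Rmin eta 1 / 2). split; [lra|].
  exists t0. split; auto.
  intros t HTt Htt0 th Hth.
  pose proof (HT t HTt) as Htg. destruct (Hdel t Htg) as [[Hd1 Hd2] Hd3].
  destruct (Hmain t HTt Htt0 Htg) as [L [HL0 HL]].
  assert (HL' : forall tau : C, Cmod tau <= Rmin eta 1 * delta t ->
    @ex_derive C_AbsRing C_NormedModule L tau /\
    cexp (L tau) = (Hfun a (RtoC t + tau) / Hfun a (RtoC t))%C /\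
    Cmod (L tau - (tau * Afun a (RtoC t) + / 2 * (tau * tau) * Bfun a (RtoC t)))%C
      <= eps / 8 * Cmod tau ^ 2 * Re (Bfun a (RtoC t))).
  { intros tau Htau. apply HL. eapply Rle_trans; [exact Htau|].
    apply Rmult_le_compat_r; [lra| apply Rmin_l]. }
  assert (Hth' : Rabs th <= Rmin eta 1 * delta t / 4) by lra.
  assert (LM := local_main a tG t (delta t) (Rmin eta 1) (eps / 8) L Hs Hd3 Hd1 Hm (Rmin_r _ _)
    ltac:(lra) HL0 HL' th Hth').
  replace (8 * (eps / 8)) with eps in LM by field. exact LM.
Qed.
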